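(* Let $\ell_E$ be a symmetric sequence space which does not coincide with $c_0$ or $\ell_\infty$ (up to equivalent norms). Then there exists a reflexive symmetric sequence space $\ell_F$ such that $\ell_F\supset\ell_E$.
   Context: For a bounded sequence $x$, $\mu(x)$ denotes the decreasing rearrangement of $|x|$. A symmetric sequence space is a linear subspace $\ell_E\subset\ell_\infty$ with a complete norm such that $x\in\ell_\infty$, $y\in\ell_E$, $\mu(x)\le\mu(y)$ imply $x\in\ell_E$ and $\|x\|_{\ell_E}\le\|y\|_{\ell_E}$. *)

(* Defs.v *)
From Stdlib Require Import Reals List.
From Coquelicot Require Import Coquelicot.
Open Scope R_scope.

Definition rseq := nat -> R.

Definition seq_zero : rseq := fun _ => 0.
Definition seq_add (x y : rseq) : rseq := fun k => x k + y k.
Definition seq_scal (a : R) (x : rseq) : rseq := fun k => a * x k.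
Definition seq_sub (x y : rseq) : rseq := fun k => x k - y k.

Definition bounded_seq (x : rseq) : Prop := exists M, forall k, Rabs (x k) <= M.

Definition c0_seq (x : rseq) : Prop :=
  forall eps, 0 < eps -> exists n0, forall k, (n0 <= k)%nat -> Rabs (x k) < eps.

(* sup norm ||x||_infty (meaningful for bounded x) *)
Definition linf_norm (x : rseq) : R :=
  real (Lub_Rbar (fun r => exists k, r = Rabs (x k))).

Definition card_gt_le (x : rseq) (s : R) (n : nat) : Prop :=
  forall l : list nat, NoDup l -> (forall k, In k l -> s < Rabs (x k)) ->
    (length l <= n)%nat.

(* decreasing rearrangement of |x|:
   mu x n = inf { s >= 0 : card {k : |x k| > s} <= n } *)
Definition mu (x : rseq) (n : nat) : R :=
  real (Glb_Rbar (fun s => 0 <= s /\ card_gt_le x s n)).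

Definition symmetric_seq_space (E : rseq -> Prop) (N : rseq -> R) : Prop :=
  E seq_zero /\
  (forall x y, E x -> E y -> E (seq_add x y)) /\
  (forall a x, E x -> E (seq_scal a x)) /\
  (forall x, E x -> bounded_seq x) /\
  (forall x, E x -> 0 <= N x) /\
  (forall x, E x -> N x = 0 -> forall k, x k = 0) /\
  (forall a x, E x -> N (seq_scal a x) = Rabs a * N x) /\
  (forall x y, E x -> E y -> N (seq_add x y) <= N x + N y) /\
  (forall u : nat -> rseq, (forall n, E (u n)) ->
     (forall eps, 0 < eps -> exists n0, forall m n, (n0 <= m)%nat -> (n0 <= n)%nat ->
          N (seq_sub (u m) (u n)) < eps) ->
     exists x, E x /\
       forall eps, 0 < eps -> exists n0, forall n, (n0 <= n)%nat ->
          N (seq_sub (u n) x) < eps) /\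
  (forall x y, bounded_seq x -> E y -> (forall n, mu x n <= mu y n) ->
     E x /\ N x <= N y).

Definition equiv_to_sup_norm (E : rseq -> Prop) (N : rseq -> R) : Prop :=
  exists c C, 0 < c /\ 0 < C /\
    forall x, E x -> c * linf_norm x <= N x /\ N x <= C * linf_norm x.

Definition is_c0_equiv (E : rseq -> Prop) (N : rseq -> R) : Prop :=
  (forall x, E x <-> c0_seq x) /\ equiv_to_sup_norm E N.

Definition is_linf_equiv (E : rseq -> Prop) (N : rseq -> R) : Prop :=
  (forall x, E x <-> bounded_seq x) /\ equiv_to_sup_norm E N.

Definition dual_elem (E : rseq -> Prop) (N : rseq -> R) (f : rseq -> R) : Prop :=
  (forall x y, E x -> E y -> f (seq_add x y) = f x + f y) /\
  (forall a x, E x -> f (seq_scal a x) = a * f x) /\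
  (exists K, forall x, E x -> Rabs (f x) <= K * N x).

Definition dual_norm_le (E : rseq -> Prop) (N : rseq -> R) (f : rseq -> R) (K : R) : Prop :=
  forall x, E x -> Rabs (f x) <= K * N x.

Definition bidual_elem (E : rseq -> Prop) (N : rseq -> R) (Phi : (rseq -> R) -> R) : Prop :=
  (forall f g, dual_elem E N f -> dual_elem E N g ->
     Phi (fun x => f x + g x) = Phi f + Phi g) /\
  (forall a f, dual_elem E N f -> Phi (fun x => a * f x) = a * Phi f) /\
  (exists C, forall f K, dual_elem E N f -> dual_norm_le E N f K ->
     Rabs (Phi f) <= C * K).

Definition reflexive (E : rseq -> Prop) (N : rseq -> R) : Prop :=
  forall Phi, bidual_elem E N Phi ->
    exists x, E x /\ forall f, dual_elem E N f -> Phi f = f x.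

(* Main.v *)
Require Import Defs.
From Stdlib Require Import Reals.
From Stdlib Require Import Lra Lia List Classical FunctionalExtensionality ClassicalEpsilon.
From Coquelicot Require Import Coquelicot.
Open Scope R_scope.

Lemma lub_props (S : R -> Prop) r0 B : S r0 -> (forall r, S r -> r <= B) ->
  (forall r, S r -> r <= real (Lub_Rbar S)) /\
  (forall b, (forall r, S r -> r <= b) -> real (Lub_Rbar S) <= b).
Proof.
  intros H0 HB. destruct (Lub_Rbar_correct S) as [ub lub].
  destruct (Lub_Rbar S) as [l| |] eqn:E.
  - split.
    + intros r Hr. exact (ub r Hr).
    + intros b Hb. exact (lub (Finite b) Hb).
  - exfalso. exact (lub (Finite B) HB).
  - exfalso. exact (ub r0 H0).
Qed.

Lemma glb_props (S : R -> Prop) r0 L : S r0 -> (forall r, S r -> L <= r) ->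
  (forall r, S r -> real (Glb_Rbar S) <= r) /\
  (forall b, (forall r, S r -> b <= r) -> b <= real (Glb_Rbar S)).
Proof.
  intros H0 HB. destruct (Glb_Rbar_correct S) as [lb glb].
  destruct (Glb_Rbar S) as [l| |] eqn:E.
  - split.
    + intros r Hr. exact (lb r Hr).
    + intros b Hb. exact (glb (Finite b) Hb).
  - exfalso. exact (lb r0 H0).
  - exfalso. exact (glb (Finite L) HB).
Qed.

Definition muS (x : rseq) n := fun s => 0 <= s /\ card_gt_le x s n.

Lemma card_big x M n : (forall k, Rabs (x k) <= M) -> card_gt_le x M n.
Proof.
  intros HM l _ Hl. destruct l as [|k l]. simpl; lia.
  exfalso. specialize (Hl k (or_introl eq_refl)). specialize (HM k). lra.
Qed.

Lemma muS_ne x n : bounded_seq x -> exists s, muS x n s.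
Proof.
  intros [M HM]. exists M. split.
  - specialize (HM 0%nat). pose proof (Rabs_pos (x 0%nat)). lra.
  - apply card_big; auto.
Qed.

Lemma mu_ub x n s : bounded_seq x -> 0 <= s -> card_gt_le x s n -> mu x n <= s.
Proof.
  intros Hb Hs Hc. destruct (muS_ne x n Hb) as [r0 Hr0].
  destruct (glb_props (muS x n) r0 0 Hr0) as [H1 H2].
  { intros r [Hr _]; lra. }
  apply H1. split; auto.
Qed.

Lemma mu_lb x n v : bounded_seq x -> (forall s, 0 <= s -> card_gt_le x s n -> v <= s) -> v <= mu x n.
Proof.
  intros Hb Hv. destruct (muS_ne x n Hb) as [r0 Hr0].
  destruct (glb_props (muS x n) r0 0 Hr0) as [H1 H2].
  { intros r [Hr _]; lra. }
  apply H2. intros r [Hr Hc]. apply Hv; auto.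
Qed.

Lemma mu_nonneg x n : bounded_seq x -> 0 <= mu x n.
Proof. intros Hb. apply mu_lb; auto. Qed.

Lemma mu_ge_list x n v l : bounded_seq x -> NoDup l -> (n < length l)%nat ->
  (forall k, In k l -> v <= Rabs (x k)) -> v <= mu x n.
Proof.
  intros Hb Hnd Hlen Hv. apply mu_lb; auto. intros s Hs Hc.
  destruct (Rle_or_lt v s) as [h|h]; auto. exfalso.
  assert (length l <= n)%nat. { apply Hc; auto. intros k Hk. specialize (Hv k Hk). lra. }
  lia.
Qed.

Lemma mu_gt_list x n s : bounded_seq x -> 0 <= s -> s < mu x n ->
  exists l, NoDup l /\ (forall k, In k l -> s < Rabs (x k)) /\ (n < length l)%nat.
Proof.
  intros Hb Hs Hlt. apply NNPP. intro Hno.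
  assert (card_gt_le x s n).
  { intros l Hnd Hl. destruct (Nat.le_gt_cases (length l) n) as [h|h]; auto.
    exfalso. apply Hno. exists l. auto. }
  pose proof (mu_ub x n s Hb Hs H). lra.
Qed.

Lemma mu_mono_pt x y n : bounded_seq y -> (forall k, Rabs (x k) <= Rabs (y k)) -> mu x n <= mu y n.
Proof.
  intros Hb Hxy.
  assert (Hbx : bounded_seq x).
  { destruct Hb as [M HM]. exists M. intro k. specialize (Hxy k). specialize (HM k). lra. }
  apply mu_lb; auto. intros s Hs Hc. apply mu_ub; auto.
  intros l Hnd Hl. apply Hc; auto. intros k Hk. specialize (Hl k Hk). specialize (Hxy k). lra.
Qed.

Lemma mu_anti x n : bounded_seq x -> mu x (S n) <= mu x n.
Proof.
  intros Hb. apply mu_lb; auto. intros s Hs Hc. apply mu_ub; auto.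
  intros l Hnd Hl. specialize (Hc l Hnd Hl). lia.
Qed.

Lemma mu_anti_le x n m : bounded_seq x -> (n <= m)%nat -> mu x m <= mu x n.
Proof.
  intros Hb Hnm. induction Hnm. lra. pose proof (mu_anti x m Hb). lra.
Qed.

Lemma mu_fin_le x a j : bounded_seq x -> 0 <= a -> (forall k, Rabs (x k) <= a) -> mu x j <= a.
Proof.
  intros Hb Ha Hk. apply mu_ub; auto. apply card_big; auto.
Qed.

Lemma mu_fin_zero x L j : bounded_seq x -> (forall k, ~ In k L -> x k = 0) -> (length L <= j)%nat ->
  mu x j <= 0.
Proof.
  intros Hb HL Hj. apply mu_ub; auto. lra.
  intros l Hnd Hl.
  assert (incl l L).
  { intros k Hk. destruct (classic (In k L)) as [h|h]; auto. exfalso.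
    specialize (Hl k Hk). rewrite (HL k h) in Hl. rewrite Rabs_R0 in Hl. lra. }
  pose proof (NoDup_incl_length Hnd H). lia.
Qed.

Lemma mu_ge_abs x k : bounded_seq x -> Rabs (x k) <= mu x 0.
Proof.
  intros Hb. apply (mu_ge_list x 0 _ (k :: nil)).
  - exact Hb.
  - constructor. simpl; tauto. constructor.
  - simpl; lia.
  - intros j [h|h]; [subst; lra | destruct h].
Qed.

Fixpoint WSa (w a : nat -> R) (off : nat) (l : list nat) : R :=
  match l with nil => 0 | k :: l' => w off * a k + WSa w a (S off) l' end.
Definition sqs (x : rseq) : rseq := fun k => x k * x k.
Fixpoint Wsum (w : nat -> R) (off n : nat) : R :=
  match n with O => 0 | S n' => w off + Wsum w (S off) n' end.
Definition wdec (w : nat -> R) := (forall i, 0 <= w i) /\ (forall i, w (S i) <= w i).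
Fixpoint msum (w : nat -> R) (x : rseq) (n : nat) : R :=
  match n with O => 0 | S n' => msum w x n' + w n' * (mu x n' * mu x n') end.

Lemma Rabs_mult_self_eq x : Rabs x * Rabs x = x * x.
Proof. rewrite <- Rabs_mult. apply Rabs_pos_eq. apply Rle_0_sqr. Qed.

Lemma sqs_nonneg x k : 0 <= sqs x k.
Proof. unfold sqs. apply Rle_0_sqr. Qed.

Lemma w_le w i j : wdec w -> (i <= j)%nat -> w j <= w i.
Proof. intros [_ Hw] H. induction H. lra. specialize (Hw m). lra. Qed.

Lemma WSa_nonneg w a off l : (forall i, 0 <= w i) -> (forall k, 0 <= a k) -> 0 <= WSa w a off l.
Proof.
  intros Hw Ha. revert off; induction l as [|k l IH]; intros off; simpl. lra.
  specialize (IH (S off)). specialize (Hw off). specialize (Ha k).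
  pose proof (Rmult_le_pos _ _ Hw Ha). lra.
Qed.

Lemma WSa_mono w a b off l : (forall i, 0 <= w i) -> (forall k, In k l -> a k <= b k) ->
  WSa w a off l <= WSa w b off l.
Proof.
  intros Hw. revert off; induction l as [|k l IH]; intros off Hab; simpl. lra.
  assert (a k <= b k) by (apply Hab; simpl; auto).
  assert (WSa w a (S off) l <= WSa w b (S off) l) by (apply IH; intros j Hj; apply Hab; simpl; auto).
  specialize (Hw off).
  assert (w off * a k <= w off * b k) by (apply Rmult_le_compat_l; lra). lra.
Qed.

Lemma WSa_ext w a b off l : (forall k, In k l -> a k = b k) -> WSa w a off l = WSa w b off l.
Proof.
  revert off; induction l as [|k l IH]; intros off Hab; simpl. lra.
  rewrite (Hab k) by (simpl; auto). rewrite (IH (S off)) by (intros j Hj; apply Hab; simpl; auto). lra.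
Qed.

Lemma WSa_app w a off l1 l2 : WSa w a off (l1 ++ l2) = WSa w a off l1 + WSa w a (off + length l1) l2.
Proof.
  revert off; induction l1 as [|k l IH]; intros off; simpl.
  - rewrite Nat.add_0_r. lra.
  - rewrite IH. replace (S off + length l)%nat with (off + S (length l))%nat by lia. lra.
Qed.

Lemma WSa_lin w a b c d off l :
  WSa w (fun k => c * a k + d * b k) off l = c * WSa w a off l + d * WSa w b off l.
Proof.
  revert off; induction l as [|k l IH]; intros off; simpl. ring.
  rewrite IH. ring.
Qed.

Lemma WSa_off_mono w a off off' l : wdec w -> (forall k, 0 <= a k) -> (off <= off')%nat ->
  WSa w a off' l <= WSa w a off l.
Proof.
  intros Hw Ha. revert off off'; induction l as [|k l IH]; intros off off' Ho; simpl. lra.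
  assert (w off' <= w off) by (apply w_le; auto).
  assert (WSa w a (S off') l <= WSa w a (S off) l) by (apply IH; lia).
  specialize (Ha k).
  assert (w off' * a k <= w off * a k) by (apply Rmult_le_compat_r; lra). lra.
Qed.

Lemma WSa_bound w a off l eta : (forall i, 0 <= w i) -> (forall k, In k l -> a k <= eta) ->
  WSa w a off l <= eta * Wsum w off (length l).
Proof.
  intros Hw. revert off; induction l as [|k l IH]; intros off Hk; simpl. lra.
  assert (a k <= eta) by (apply Hk; simpl; auto).
  assert (WSa w a (S off) l <= eta * Wsum w (S off) (length l)) by (apply IH; intros j Hj; apply Hk; simpl; auto).
  specialize (Hw off).
  assert (w off * a k <= w off * eta) by (apply Rmult_le_compat_l; lra). lra.
Qed.

Lemma WSa_lbound w a off l eta : (forall i, 0 <= w i) -> (forall k, In k l -> eta <= a k) ->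
  eta * Wsum w off (length l) <= WSa w a off l.
Proof.
  intros Hw. revert off; induction l as [|k l IH]; intros off Hk; simpl. lra.
  assert (eta <= a k) by (apply Hk; simpl; auto).
  assert (eta * Wsum w (S off) (length l) <= WSa w a (S off) l) by (apply IH; intros j Hj; apply Hk; simpl; auto).
  specialize (Hw off).
  assert (w off * eta <= w off * a k) by (apply Rmult_le_compat_l; lra). lra.
Qed.

Lemma exchange w a off k l2 : wdec w -> (forall j, In j l2 -> a k <= a j) ->
  WSa w a off (k :: l2) <= WSa w a off l2 + w (off + length l2)%nat * a k.
Proof.
  intros Hw. revert off; induction l2 as [|b l2 IH]; intros off Hj; simpl.
  - rewrite Nat.add_0_r. lra.
  - assert (Hb : a k <= a b) by (apply Hj; simpl; auto).
    specialize (IH (S off)). simpl in IH.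
    assert (IH' : w (S off) * a k + WSa w a (S (S off)) l2 <=
                  WSa w a (S off) l2 + w (S (off + length l2)) * a k)
      by (apply IH; intros j Hj'; apply Hj; simpl; auto).
    replace (off + S (length l2))%nat with (S (off + length l2))%nat by lia.
    assert (w (S off) <= w off) by (apply (proj2 Hw)).
    assert (0 <= (w off - w (S off)) * (a b - a k)) by (apply Rmult_le_pos; lra).
    lra.
Qed.

Lemma min_split (f : nat -> R) l : l <> nil ->
  exists l1 k l2, l = l1 ++ k :: l2 /\ forall j, In j l -> f k <= f j.
Proof.
  induction l as [|a t IH]; intros Hne. congruence.
  destruct t as [|b t'].
  - exists nil, a, nil. split; auto. intros j [h|h]; [subst; lra| destruct h].
  - destruct IH as [l1 [k [l2 [Ht Hmin]]]]. discriminate.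
    destruct (Rle_or_lt (f a) (f k)) as [h|h].
    + exists nil, a, (b :: t'). split; auto. intros j [hj|hj]. subst; lra.
      specialize (Hmin j hj). lra.
    + exists (a :: l1), k, l2. split. rewrite Ht. reflexivity.
      intros j [hj|hj]. subst; lra. auto.
Qed.

Lemma B_le w x : wdec w -> bounded_seq x -> forall n l, NoDup l -> length l = n ->
  WSa w (sqs x) 0 l <= msum w x n.
Proof.
  intros Hw Hb n. induction n as [|m IH]; intros l Hnd Hlen.
  - destruct l; simpl in *; try discriminate. lra.
  - assert (Hne : l <> nil) by (intro; subst; simpl in Hlen; discriminate).
    destruct (min_split (fun k => Rabs (x k)) l Hne) as [l1 [k [l2 [Hl Hmin]]]].
    assert (Hk : Rabs (x k) <= mu x m).
    { apply (mu_ge_list x m _ l Hb Hnd). lia. intros j Hj. apply Hmin; auto. }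
    subst l. rewrite WSa_app.
    pose proof (exchange w (sqs x) (0 + length l1) k l2 Hw) as Hex.
    assert (Hex' : WSa w (sqs x) (0 + length l1) (k :: l2) <=
            WSa w (sqs x) (0 + length l1) l2 + w (0 + length l1 + length l2)%nat * sqs x k).
    { apply Hex. intros j Hj. unfold sqs.
      assert (Rabs (x k) <= Rabs (x j)) by (apply Hmin; apply in_or_app; right; right; auto).
      rewrite <- (Rabs_mult_self_eq (x k)), <- (Rabs_mult_self_eq (x j)). pose proof (Rabs_pos (x k)).
      apply Rmult_le_compat; lra. }
    assert (HIH : WSa w (sqs x) 0 (l1 ++ l2) <= msum w x m).
    { apply IH. eapply NoDup_remove_1; eauto. rewrite length_app in *. simpl in Hlen. lia. }
    rewrite WSa_app in HIH.
    rewrite length_app in Hlen. simpl in Hlen.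
    replace (0 + length l1 + length l2)%nat with m in Hex' by lia.
    simpl msum.
    assert (sqs x k <= mu x m * mu x m).
    { unfold sqs. rewrite <- (Rabs_mult_self_eq (x k)). pose proof (Rabs_pos (x k)).
      apply Rmult_le_compat; lra. }
    pose proof (proj1 Hw m).
    assert (w m * sqs x k <= w m * (mu x m * mu x m)) by (apply Rmult_le_compat_l; lra).
    lra.
Qed.

Lemma fresh_nat (l : list nat) : exists k, ~ In k l.
Proof.
  exists (list_max l + 1)%nat. intro H.
  assert (Hf : List.Forall (fun k => (k <= list_max l)%nat) l) by (apply list_max_le; apply Nat.le_refl).
  rewrite List.Forall_forall in Hf. specialize (Hf _ H). lia.
Qed.

Lemma NoDup_snoc (l : list nat) k : NoDup l -> ~ In k l -> NoDup (l ++ k :: nil).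
Proof.
  intros H1 H2. apply NoDup_app; auto. constructor. simpl; tauto. constructor.
  intros a Ha [h|h]; [subst; tauto | destruct h].
Qed.

Lemma B_ge w y r : wdec w -> bounded_seq y -> 0 <= r < 1 -> forall n,
  exists l, NoDup l /\ length l = n /\ r * r * msum w y n <= WSa w (sqs y) 0 l.
Proof.
  intros Hw Hb Hr n. induction n as [|n IH].
  - exists nil. simpl. split. constructor. split; auto. lra.
  - destruct IH as [l [Hnd [Hlen Hle]]].
    assert (Hk : exists k, ~ In k l /\ r * mu y n <= Rabs (y k)).
    { pose proof (mu_nonneg y n Hb) as Hm0. destruct (Req_dec (mu y n) 0) as [h|h].
      - destruct (fresh_nat l) as [k Hk]. exists k. split; auto. rewrite h.
        pose proof (Rabs_pos (y k)). lra.
      - assert (Hs : 0 <= r * mu y n) by (apply Rmult_le_pos; lra).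
        assert (Hs2 : r * mu y n < mu y n).
        { assert (0 < mu y n) by lra.
          assert ((1 - r) * mu y n > 0) by (apply Rmult_lt_0_compat; lra). lra. }
        destruct (mu_gt_list y n _ Hb Hs Hs2) as [L [HL1 [HL2 HL3]]].
        apply NNPP. intro Hno.
        assert (incl L l).
        { intros k Hk. apply NNPP. intro Hkl. apply Hno. exists k. split; auto.
          specialize (HL2 k Hk). lra. }
        pose proof (NoDup_incl_length HL1 H). lia. }
    destruct Hk as [k [Hkl Hk]].
    exists (l ++ k :: nil). split. apply NoDup_snoc; auto.
    split. rewrite length_app. simpl. lia.
    rewrite WSa_app. simpl. rewrite Hlen. simpl.
    assert (r * mu y n * (r * mu y n) <= sqs y k).
    { unfold sqs. rewrite <- (Rabs_mult_self_eq (y k)).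
      pose proof (mu_nonneg y n Hb). assert (0 <= r * mu y n) by (apply Rmult_le_pos; lra).
      apply Rmult_le_compat; lra. }
    pose proof (proj1 Hw n).
    assert (w n * (r * mu y n * (r * mu y n)) <= w n * sqs y k) by (apply Rmult_le_compat_l; lra).
    replace (r * r * (msum w y n + w n * (mu y n * mu y n))) with
      (r * r * msum w y n + w n * (r * mu y n * (r * mu y n))) by ring.
    lra.
Qed.

Definition FF w x := exists B, forall l, NoDup l -> WSa w (sqs x) 0 l <= B.
Definition SS w x := fun r => exists l, NoDup l /\ r = WSa w (sqs x) 0 l.
Definition sq w x := real (Lub_Rbar (SS w x)).
Definition NF w x := sqrt (sq w x).

Lemma SS_nil w x : SS w x 0.
Proof. exists nil. split. constructor. reflexivity. Qed.

Lemma L1 w x : FF w x -> forall l, NoDup l -> WSa w (sqs x) 0 l <= sq w x.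
Proof.
  intros [B HB] l Hl. destruct (lub_props (SS w x) 0 B (SS_nil w x)) as [H1 H2].
  { intros r [l' [Hl' ->]]. auto. }
  apply H1. exists l; auto.
Qed.

Lemma L3 w x b : (forall l, NoDup l -> WSa w (sqs x) 0 l <= b) -> FF w x /\ sq w x <= b.
Proof.
  intros HB. split. exists b; auto.
  destruct (lub_props (SS w x) 0 b (SS_nil w x)) as [H1 H2].
  { intros r [l' [Hl' ->]]. auto. }
  apply H2. intros r [l' [Hl' ->]]. auto.
Qed.

Lemma L2 w x eps : FF w x -> 0 < eps -> exists l, NoDup l /\ sq w x - eps < WSa w (sqs x) 0 l.
Proof.
  intros HF He. apply NNPP. intro Hno.
  assert (forall l, NoDup l -> WSa w (sqs x) 0 l <= sq w x - eps).
  { intros l Hl. destruct (Rle_or_lt (WSa w (sqs x) 0 l) (sq w x - eps)) as [h|h]; auto.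
    exfalso. apply Hno. exists l. auto. }
  destruct (L3 w x _ H). lra.
Qed.

Lemma sq_nonneg w x : FF w x -> 0 <= sq w x.
Proof. intros HF. pose proof (L1 w x HF nil (NoDup_nil _)). simpl in H. auto. Qed.

Lemma NF_sq w x : FF w x -> NF w x * NF w x = sq w x.
Proof. intros HF. unfold NF. apply sqrt_sqrt. apply sq_nonneg; auto. Qed.

Definition wok w := wdec w /\ 0 < w 0%nat.

Lemma WSa_scal w a c off l : WSa w (fun k => c * a k) off l = c * WSa w a off l.
Proof. revert off; induction l as [|k l IH]; intros off; simpl. ring. rewrite IH. ring. Qed.

Lemma coord_bound w x k : FF w x -> w 0%nat * (x k * x k) <= sq w x.
Proof.
  intros HF. pose proof (L1 w x HF (k :: nil)) as H. simpl in H.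
  assert (NoDup (k :: nil)) by (constructor; [simpl; tauto | constructor]).
  specialize (H H0). unfold sqs in H. lra.
Qed.

Lemma abs_le_sq a : Rabs a <= 1 + a * a.
Proof.
  rewrite <- (Rabs_mult_self_eq a). pose proof (Rabs_pos a).
  assert (0 <= (Rabs a - 1/2) * (Rabs a - 1/2)) by apply Rle_0_sqr. lra.
Qed.

Lemma FF_bounded w x : wok w -> FF w x -> bounded_seq x.
Proof.
  intros [Hw H0] HF. exists (1 + sq w x / w 0%nat). intro k.
  pose proof (coord_bound w x k HF). pose proof (abs_le_sq (x k)).
  assert (x k * x k <= sq w x / w 0%nat).
  { replace (x k * x k) with ((w 0%nat * (x k * x k)) / w 0%nat) by (field; lra).
    unfold Rdiv. apply Rmult_le_compat_r; [left; apply Rinv_0_lt_compat; lra | lra]. }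
  lra.
Qed.

Lemma coord_abs w x k : wok w -> FF w x -> Rabs (x k) <= NF w x / sqrt (w 0%nat).
Proof.
  intros [Hw H0] HF. pose proof (coord_bound w x k HF).
  pose proof (sqrt_lt_R0 _ H0) as Hs.
  apply (Rmult_le_reg_l (sqrt (w 0%nat))); auto.
  unfold Rdiv. rewrite (Rmult_comm (NF w x)), <- Rmult_assoc, Rinv_r by lra. rewrite Rmult_1_l.
  unfold NF. rewrite <- (sqrt_Rsqr_abs (x k)). rewrite <- sqrt_mult_alt by lra.
  apply sqrt_le_1_alt. unfold Rsqr. lra.
Qed.

Lemma NF_nonneg w x : 0 <= NF w x.
Proof. apply sqrt_pos. Qed.

Lemma NF_zero w x : wok w -> FF w x -> NF w x = 0 -> forall k, x k = 0.
Proof.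
  intros Hw HF H0 k. pose proof (coord_abs w x k Hw HF). rewrite H0 in H.
  unfold Rdiv in H. rewrite Rmult_0_l in H. pose proof (Rabs_pos (x k)).
  destruct (Req_dec (x k) 0); auto. exfalso. pose proof (Rabs_pos_lt _ H2). lra.
Qed.

Lemma FF_zero w : wok w -> FF w seq_zero /\ sq w seq_zero <= 0.
Proof.
  intros [Hw _]. apply L3. intros l _.
  pose proof (WSa_bound w (sqs seq_zero) 0 l 0 (proj1 Hw)) as H.
  rewrite Rmult_0_l in H. apply H. intros k _. unfold sqs, seq_zero. lra.
Qed.

Lemma WS_scal w x a l : WSa w (sqs (seq_scal a x)) 0 l = a * a * WSa w (sqs x) 0 l.
Proof.
  rewrite <- WSa_scal. apply WSa_ext. intros k _. unfold sqs, seq_scal. ring.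
Qed.

Lemma FF_scal w x a : FF w x -> FF w (seq_scal a x) /\ sq w (seq_scal a x) <= a * a * sq w x.
Proof.
  intros HF. apply L3. intros l Hl. rewrite WS_scal.
  apply Rmult_le_compat_l. apply Rle_0_sqr. apply L1; auto.
Qed.

Lemma sq_scal w x a : FF w x -> sq w (seq_scal a x) = a * a * sq w x.
Proof.
  intros HF. destruct (FF_scal w x a HF) as [HF' Hle].
  apply Rle_antisym; auto.
  destruct (Req_dec a 0) as [h|h].
  - subst. rewrite !Rmult_0_l. apply sq_nonneg; auto.
  - assert (Ha : 0 < a * a) by (apply Rsqr_pos_lt; auto).
    assert (sq w x <= sq w (seq_scal a x) / (a * a)).
    { apply L3. intros l Hl. pose proof (L1 w _ HF' l Hl) as H. rewrite WS_scal in H.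
      replace (WSa w (sqs x) 0 l) with (a * a * WSa w (sqs x) 0 l / (a * a)) by (field; auto).
      unfold Rdiv. apply Rmult_le_compat_r. left; apply Rinv_0_lt_compat; auto. auto. }
    replace (sq w (seq_scal a x)) with (a * a * (sq w (seq_scal a x) / (a * a))) by (field; auto).
    apply Rmult_le_compat_l; lra.
Qed.

Lemma NF_scal w x a : FF w x -> NF w (seq_scal a x) = Rabs a * NF w x.
Proof.
  intros HF. unfold NF. rewrite sq_scal by auto.
  rewrite sqrt_mult_alt by apply Rle_0_sqr. f_equal. apply sqrt_Rsqr_abs.
Qed.

Lemma WS_add_le w x y l : wdec w -> WSa w (sqs (seq_add x y)) 0 l <= 2 * WSa w (sqs x) 0 l + 2 * WSa w (sqs y) 0 l.
Proof.
  intros Hw. rewrite <- WSa_lin. apply WSa_mono. apply Hw. intros k _. unfold sqs, seq_add.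
  assert (0 <= (x k - y k) * (x k - y k)) by apply Rle_0_sqr. lra.
Qed.

Lemma FF_add w x y : wok w -> FF w x -> FF w y -> FF w (seq_add x y).
Proof.
  intros Hw Hx Hy. exists (2 * sq w x + 2 * sq w y). intros l Hl.
  pose proof (WS_add_le w x y l (proj1 Hw)). pose proof (L1 w x Hx l Hl). pose proof (L1 w y Hy l Hl). lra.
Qed.

Lemma amgm_opt P Q M : 0 <= P -> 0 <= Q -> (forall t, 0 < t -> M <= t * P + Q / t) ->
  M <= 2 * sqrt P * sqrt Q.
Proof.
  intros HP HQ H.
  destruct (Req_dec P 0) as [hP|hP].
  - subst. rewrite sqrt_0. rewrite Rmult_0_r, Rmult_0_l.
    destruct (Rle_or_lt M 0) as [h|h]; auto. exfalso.
    assert (Ht : 0 < 2 * (Q + 1) / M) by (apply Rdiv_lt_0_compat; lra).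
    specialize (H _ Ht). 
    assert (Q / (2 * (Q + 1) / M) = Q * M / (2 * (Q + 1))) by (field; lra).
    rewrite H0 in H. rewrite Rmult_0_r in H.
    assert (Q * M / (2 * (Q + 1)) < M).
    { apply (Rmult_lt_reg_r (2 * (Q + 1))). lra. unfold Rdiv. rewrite Rmult_assoc, Rinv_l by lra. nra. }
    lra.
  - destruct (Req_dec Q 0) as [hQ|hQ].
    + subst. rewrite sqrt_0. rewrite Rmult_0_r.
      destruct (Rle_or_lt M 0) as [h|h]; auto. exfalso.
      assert (Ht : 0 < M / (2 * (P + 1))) by (apply Rdiv_lt_0_compat; lra).
      specialize (H _ Ht). unfold Rdiv in H. rewrite Rmult_0_l, Rplus_0_r in H.
      assert (M * / (2 * (P + 1)) * P < M).
      { apply (Rmult_lt_reg_r (2 * (P + 1))). lra.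
        replace (M * / (2 * (P + 1)) * P * (2 * (P + 1))) with (M * P) by (field; lra). nra. }
      lra.
    + assert (sP : 0 < sqrt P) by (apply sqrt_lt_R0; lra).
      assert (sQ : 0 < sqrt Q) by (apply sqrt_lt_R0; lra).
      assert (Ht : 0 < sqrt Q / sqrt P) by (apply Rdiv_lt_0_compat; auto).
      specialize (H _ Ht).
      assert (EP : P = sqrt P * sqrt P) by (rewrite sqrt_sqrt; lra).
      assert (EQ : Q = sqrt Q * sqrt Q) by (rewrite sqrt_sqrt; lra).
      set (p := sqrt P) in *. set (q := sqrt Q) in *.
      rewrite EP, EQ in H.
      replace (q / p * (p * p) + q * q / (q / p)) with (2 * p * q) in H; auto.
      field. split; lra.
Qed.

Lemma sq_pt_ineq a b t : 0 < t -> (a + b) * (a + b) <= (1 + t) * (a * a) + (1 + / t) * (b * b).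
Proof.
  intros Ht.
  assert ((1 + t) * (a * a) + (1 + / t) * (b * b) - (a + b) * (a + b) = (t * a - b) * (t * a - b) / t) by (field; lra).
  assert (0 <= (t * a - b) * (t * a - b) / t).
  { unfold Rdiv. apply Rmult_le_pos. apply Rle_0_sqr. left; apply Rinv_0_lt_compat; auto. }
  lra.
Qed.

Lemma NF_triangle w x y : wok w -> FF w x -> FF w y -> NF w (seq_add x y) <= NF w x + NF w y.
Proof.
  intros Hw Hx Hy.
  set (A := sq w x). set (B := sq w y).
  assert (HA : 0 <= A) by (apply sq_nonneg; auto).
  assert (HB : 0 <= B) by (apply sq_nonneg; auto).
  assert (Hle : sq w (seq_add x y) <= (sqrt A + sqrt B) * (sqrt A + sqrt B)).
  { apply L3. intros l Hl.
    assert (forall t, 0 < t -> WSa w (sqs (seq_add x y)) 0 l - A - B <= t * A + B / t).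
    { intros t Ht.
      assert (WSa w (sqs (seq_add x y)) 0 l <= (1 + t) * WSa w (sqs x) 0 l + (1 + / t) * WSa w (sqs y) 0 l).
      { rewrite <- WSa_lin. apply WSa_mono. apply (proj1 (proj1 Hw)). intros k _.
        unfold sqs, seq_add. apply sq_pt_ineq; auto. }
      pose proof (L1 w x Hx l Hl). pose proof (L1 w y Hy l Hl).
      change (sq w x) with A in H0. change (sq w y) with B in H1.
      assert (0 < / t) by (apply Rinv_0_lt_compat; auto).
      assert ((1 + t) * WSa w (sqs x) 0 l <= (1 + t) * A) by (apply Rmult_le_compat_l; lra).
      assert ((1 + / t) * WSa w (sqs y) 0 l <= (1 + / t) * B) by (apply Rmult_le_compat_l; lra).
      unfold Rdiv. lra. }
    pose proof (amgm_opt A B _ HA HB H).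
    replace ((sqrt A + sqrt B) * (sqrt A + sqrt B)) with (sqrt A * sqrt A + sqrt B * sqrt B + 2 * sqrt A * sqrt B) by ring.
    rewrite (sqrt_sqrt A HA), (sqrt_sqrt B HB). lra. }
  unfold NF. fold A B. 
  rewrite <- (sqrt_square (sqrt A + sqrt B)) by (pose proof (sqrt_pos A); pose proof (sqrt_pos B); lra).
  apply sqrt_le_1_alt. auto.
Qed.

Lemma msum_mono w x y n : wdec w -> bounded_seq x -> (forall i, mu x i <= mu y i) -> msum w x n <= msum w y n.
Proof.
  intros Hw Hb H. induction n as [|n IH]; simpl. lra.
  pose proof (mu_nonneg x n Hb). specialize (H n).
  assert (mu x n * mu x n <= mu y n * mu y n) by (apply Rmult_le_compat; lra).
  assert (w n * (mu x n * mu x n) <= w n * (mu y n * mu y n)) by (apply Rmult_le_compat_l; [apply (proj1 Hw) | lra]).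
  lra.
Qed.

Lemma msum_le_sq w y n : wok w -> FF w y -> msum w y n <= sq w y.
Proof.
  intros Hw HF. pose proof (FF_bounded w y Hw HF) as Hb.
  assert (H : forall r, 0 <= r < 1 -> r * r * msum w y n <= sq w y).
  { intros r Hr. destruct (B_ge w y r (proj1 Hw) Hb Hr n) as [l [Hl [_ Hle]]].
    pose proof (L1 w y HF l Hl). lra. }
  pose proof (sq_nonneg w y HF) as Hs.
  destruct (Rle_or_lt (msum w y n) (sq w y)) as [h|h]; auto. exfalso.
  set (m := msum w y n) in *. set (s := sq w y) in *.
  set (d := (m - s) / (4 * m)).
  assert (Hd0 : 0 < d) by (unfold d; apply Rdiv_lt_0_compat; lra).
  assert (Hd1 : d <= 1/4).
  { unfold d. apply (Rmult_le_reg_r (4 * m)). lra. unfold Rdiv. rewrite Rmult_assoc, Rinv_l by lra. lra. }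
  specialize (H (1 - d) ltac:(lra)).
  assert (Hr2 : 1 - 2 * d <= (1 - d) * (1 - d)) by nra.
  assert ((1 - 2 * d) * m <= (1 - d) * (1 - d) * m) by (apply Rmult_le_compat_r; lra).
  assert (Hdm : 2 * d * m = (m - s) / 2) by (unfold d; field; lra).
  lra.
Qed.

Lemma sym_F w x y : wok w -> bounded_seq x -> FF w y -> (forall n, mu x n <= mu y n) ->
  FF w x /\ NF w x <= NF w y.
Proof.
  intros Hw Hb HF H.
  assert (FF w x /\ sq w x <= sq w y).
  { apply L3. intros l Hl.
    pose proof (B_le w x (proj1 Hw) Hb (length l) l Hl eq_refl).
    pose proof (msum_mono w x y (length l) (proj1 Hw) Hb H).
    pose proof (msum_le_sq w y (length l) Hw HF). lra. }
  destruct H0. split; auto. unfold NF. apply sqrt_le_1_alt. auto.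
Qed.

Lemma WS_sub_le w x y l : wdec w -> WSa w (sqs (seq_sub x y)) 0 l <= 2 * WSa w (sqs x) 0 l + 2 * WSa w (sqs y) 0 l.
Proof.
  intros Hw. rewrite <- WSa_lin. apply WSa_mono. apply Hw. intros k _. unfold sqs, seq_sub.
  assert (0 <= (x k + y k) * (x k + y k)) by apply Rle_0_sqr. lra.
Qed.

Lemma FF_sub w x y : wok w -> FF w x -> FF w y -> FF w (seq_sub x y).
Proof.
  intros Hw Hx Hy. exists (2 * sq w x + 2 * sq w y). intros l Hl.
  pose proof (WS_sub_le w x y l (proj1 Hw)). pose proof (L1 w x Hx l Hl). pose proof (L1 w y Hy l Hl). lra.
Qed.

Lemma cv_const c : Un_cv (fun _ => c) c.
Proof. intros eps He. exists 0%nat. intros n _. unfold R_dist. rewrite Rminus_diag, Rabs_R0. auto. Qed.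

Lemma WSa_lim w (a : nat -> nat -> R) b off l : (forall k, Un_cv (fun m => a m k) (b k)) ->
  Un_cv (fun m => WSa w (a m) off l) (WSa w b off l).
Proof.
  intros H. revert off; induction l as [|k l IH]; intros off; simpl.
  - apply cv_const.
  - apply CV_plus; auto. apply CV_mult; auto. apply cv_const.
Qed.

Lemma lim_le (v : nat -> R) L B n0 : Un_cv v L -> (forall m, (n0 <= m)%nat -> v m <= B) -> L <= B.
Proof.
  intros Hv Hb. destruct (Rle_or_lt L B) as [h|h]; auto. exfalso.
  destruct (Hv (L - B) ltac:(lra)) as [N HN].
  specialize (HN (Nat.max N n0) ltac:(lia)). specialize (Hb (Nat.max N n0) ltac:(lia)).
  unfold R_dist in HN. apply Rabs_def2 in HN. lra.
Qed.

Lemma complete_F w : wok w -> forall u : nat -> rseq, (forall n, FF w (u n)) ->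
     (forall eps, 0 < eps -> exists n0, forall m n, (n0 <= m)%nat -> (n0 <= n)%nat ->
          NF w (seq_sub (u m) (u n)) < eps) ->
     exists x, FF w x /\
       forall eps, 0 < eps -> exists n0, forall n, (n0 <= n)%nat ->
          NF w (seq_sub (u n) x) < eps.
Proof.
  intros Hw u HF HC.
  assert (Hs0 : 0 < sqrt (w 0%nat)) by (apply sqrt_lt_R0; apply Hw).
  assert (Hcc : forall k, Cauchy_crit (fun n => u n k)).
  { intros k eps He. destruct (HC (eps * sqrt (w 0%nat))) as [n0 Hn0].
    apply Rmult_lt_0_compat; auto.
    exists n0. intros n m Hn Hm. unfold R_dist.
    pose proof (coord_abs w (seq_sub (u n) (u m)) k Hw (FF_sub w _ _ Hw (HF n) (HF m))) as Hk.
    unfold seq_sub in Hk at 1. specialize (Hn0 n m Hn Hm).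
    assert (NF w (seq_sub (u n) (u m)) / sqrt (w 0%nat) < eps).
    { apply (Rmult_lt_reg_r (sqrt (w 0%nat))); auto. unfold Rdiv. rewrite Rmult_assoc, Rinv_l by lra. lra. }
    lra. }
  set (x := fun k => proj1_sig (Rcomplete.R_complete _ (Hcc k))).
  assert (Hx : forall k, Un_cv (fun n => u n k) (x k)).
  { intros k. unfold x. destruct (Rcomplete.R_complete _ (Hcc k)). simpl. auto. }
  assert (Key : forall eps, 0 < eps -> exists n0, forall n, (n0 <= n)%nat ->
            FF w (seq_sub (u n) x) /\ sq w (seq_sub (u n) x) <= eps * eps).
  { intros eps He. destruct (HC eps He) as [n0 Hn0]. exists n0. intros n Hn.
    apply L3. intros l Hl.
    apply (lim_le (fun m => WSa w (sqs (seq_sub (u n) (u m))) 0 l) _ _ n0).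
    - apply (WSa_lim w (fun m => sqs (seq_sub (u n) (u m)))). intros k. unfold sqs, seq_sub.
      apply CV_mult; apply CV_minus; auto; apply cv_const.
    - intros m Hm. specialize (Hn0 n m Hn Hm).
      pose proof (FF_sub w _ _ Hw (HF n) (HF m)) as HFs.
      pose proof (L1 w _ HFs l Hl). rewrite <- NF_sq in H by auto.
      pose proof (NF_nonneg w (seq_sub (u n) (u m))).
      assert (NF w (seq_sub (u n) (u m)) * NF w (seq_sub (u n) (u m)) <= eps * eps) by (apply Rmult_le_compat; lra).
      lra. }
  destruct (Key 1 ltac:(lra)) as [n1 Hn1]. destruct (Hn1 n1 (le_n _)) as [HF1 _].
  exists x. split.
  - assert (Ex : x = seq_sub (u n1) (seq_sub (u n1) x)).
    { apply functional_extensionality. intro k. unfold seq_sub. ring. }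
    rewrite Ex. apply FF_sub; auto.
  - intros eps He. destruct (Key (eps / 2) ltac:(lra)) as [n0 Hn0]. exists n0. intros n Hn.
    destruct (Hn0 n Hn) as [HFn Hsq].
    rewrite <- NF_sq in Hsq by auto.
    pose proof (NF_nonneg w (seq_sub (u n) x)).
    destruct (Rle_or_lt (eps / 2) (NF w (seq_sub (u n) x))) as [h|h].
    + assert (eps / 2 * (eps / 2) <= NF w (seq_sub (u n) x) * NF w (seq_sub (u n) x)) by (apply Rmult_le_compat; lra).
      assert (NF w (seq_sub (u n) x) = eps / 2) by nra. lra.
    + lra.
Qed.

Lemma F_sym w : wok w -> symmetric_seq_space (FF w) (NF w).
Proof.
  intros Hw. unfold symmetric_seq_space.
  split. exact (proj1 (FF_zero w Hw)).
  split. intros x y Hx Hy. apply FF_add; auto.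
  split. intros a x Hx. exact (proj1 (FF_scal w x a Hx)).
  split. intros x Hx. apply (FF_bounded w); auto.
  split. intros x _. apply NF_nonneg.
  split. intros x Hx H0. apply (NF_zero w); auto.
  split. intros a x Hx. apply NF_scal; auto.
  split. intros x y Hx Hy. apply NF_triangle; auto.
  split. apply complete_F; auto.
  intros x y Hb Hy H. apply sym_F; auto.
Qed.

Lemma nat_unbounded r : exists n : nat, r < INR n.
Proof.
  destruct (Rle_or_lt r 0) as [h|h].
  - exists 1%nat. simpl. lra.
  - destruct (archimed_cor1 (/ r)) as [N [HN1 HN2]]. apply Rinv_0_lt_compat; auto.
    exists N. assert (0 < INR N) by (apply lt_0_INR; auto).
    rewrite <- (Rinv_inv r). rewrite <- (Rinv_inv (INR N)).
    apply Rinv_lt_contravar; auto. apply Rmult_lt_0_compat; apply Rinv_0_lt_compat; auto.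
Qed.

Definition unitv (n : nat) : rseq := fun k => if Nat.eqb k n then 1 else 0.
Fixpoint trunc (x : rseq) (N : nat) : rseq :=
  match N with O => seq_zero | S n => seq_add (trunc x n) (seq_scal (x n) (unitv n)) end.

Lemma trunc_val x N k : trunc x N k = if Nat.ltb k N then x k else 0.
Proof.
  induction N as [|n IH]; simpl.
  - unfold seq_zero. destruct (Nat.ltb_spec k 0); [lia|auto].
  - unfold seq_add, seq_scal, unitv. rewrite IH.
    destruct (Nat.ltb_spec k n); destruct (Nat.ltb_spec k (S n)); destruct (Nat.eqb_spec k n); try lia.
    ring. subst; ring. ring.
Qed.

Lemma FF_unitv w n : wok w -> FF w (unitv n).
Proof.
  intros Hw. exists (w 0%nat). intros l Hl.
  assert (H : forall off, WSa w (sqs (unitv n)) off l <= w 0%nat).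
  { induction l as [|k l IH]; intros off; simpl.
    - apply (proj1 (proj1 Hw)).
    - inversion Hl; subst. unfold sqs at 1, unitv at 1 2. destruct (Nat.eqb_spec k n).
      + subst. assert (WSa w (sqs (unitv n)) (S off) l <= 0 * Wsum w (S off) (length l)).
        { apply WSa_bound. apply (proj1 (proj1 Hw)). intros j Hj. unfold sqs, unitv.
          destruct (Nat.eqb_spec j n). subst; tauto. lra. }
        assert (w off <= w 0%nat) by (apply w_le; [apply Hw|lia]). lra.
      + specialize (IH H2 (S off)). lra. }
  apply H.
Qed.

Lemma FF_trunc w x N : wok w -> FF w (trunc x N).
Proof.
  intros Hw. induction N as [|n IH]; simpl.
  - exact (proj1 (FF_zero w Hw)).
  - apply FF_add; auto. exact (proj1 (FF_scal w _ _ (FF_unitv w n Hw))).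
Qed.

Lemma FF_dom w x y : wok w -> FF w y -> (forall k, Rabs (x k) <= Rabs (y k)) -> FF w x /\ sq w x <= sq w y.
Proof.
  intros Hw Hy H. apply L3. intros l Hl. eapply Rle_trans; [|apply (L1 w y Hy l Hl)].
  apply WSa_mono. apply Hw. intros k _. unfold sqs.
  rewrite <- (Rabs_mult_self_eq (x k)), <- (Rabs_mult_self_eq (y k)).
  pose proof (Rabs_pos (x k)). specialize (H k). apply Rmult_le_compat; lra.
Qed.

Lemma NF_mono w x y : FF w x -> sq w x <= sq w y -> NF w x <= NF w y.
Proof. intros _ H. unfold NF. apply sqrt_le_1_alt; auto. Qed.

Fixpoint lcomb (cs : list (R * nat)) (x : rseq) : R :=
  match cs with nil => 0 | (a, k) :: cs' => a * x k + lcomb cs' x end.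
Fixpoint labs (cs : list (R * nat)) : R :=
  match cs with nil => 0 | (a, k) :: cs' => Rabs a + labs cs' end.

Lemma lcomb_add cs x y : lcomb cs (seq_add x y) = lcomb cs x + lcomb cs y.
Proof. induction cs as [|[a k] cs IH]; simpl. ring. rewrite IH. unfold seq_add. ring. Qed.
Lemma lcomb_scal cs a x : lcomb cs (seq_scal a x) = a * lcomb cs x.
Proof. induction cs as [|[b k] cs IH]; simpl. ring. rewrite IH. unfold seq_scal. ring. Qed.
Lemma labs_nonneg cs : 0 <= labs cs.
Proof. induction cs as [|[a k] cs IH]; simpl. lra. pose proof (Rabs_pos a). lra. Qed.

Lemma lcomb_bound w cs x : wok w -> FF w x ->
  Rabs (lcomb cs x) <= (labs cs * / sqrt (w 0%nat)) * NF w x.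
Proof.
  intros Hw HF. induction cs as [|[a k] cs IH]; simpl.
  - rewrite Rabs_R0. rewrite Rmult_0_l, Rmult_0_l. lra.
  - pose proof (coord_abs w x k Hw HF). pose proof (Rabs_pos a).
    eapply Rle_trans. apply Rabs_triang. rewrite Rabs_mult.
    assert (Rabs a * Rabs (x k) <= Rabs a * (NF w x / sqrt (w 0%nat))) by (apply Rmult_le_compat_l; auto).
    unfold Rdiv in H1. lra.
Qed.

Lemma dual_lcomb w cs : wok w -> dual_elem (FF w) (NF w) (lcomb cs).
Proof.
  intros Hw. split. intros x y _ _. apply lcomb_add.
  split. intros a x _. apply lcomb_scal.
  exists (labs cs * / sqrt (w 0%nat)). intros x Hx. apply lcomb_bound; auto.
Qed.

Lemma dual_zero_norm E N (f : rseq -> R) : (forall x, E x -> 0 <= N x) -> (forall x, E x -> f x = 0) -> dual_norm_le E N f 0.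
Proof. intros HN Hf x Hx. rewrite Hf by auto. rewrite Rabs_R0, Rmult_0_l. lra. Qed.

Lemma Phi_lcomb w Phi : wok w -> bidual_elem (FF w) (NF w) Phi -> forall cs,
  Phi (lcomb cs) = lcomb cs (fun k => Phi (fun x => x k)).
Proof.
  intros Hw [Hadd [Hsc [C HC]]] cs. induction cs as [|[a k] cs IH].
  - change (lcomb nil (fun k => Phi (fun x => x k))) with 0. assert (Hd : dual_elem (FF w) (NF w) (lcomb nil)) by apply (dual_lcomb w nil Hw).
    pose proof (HC (lcomb nil) 0 Hd) as H.
    assert (Rabs (Phi (lcomb nil)) <= C * 0).
    { apply H. apply dual_zero_norm. intros; apply NF_nonneg. intros; reflexivity. }
    rewrite Rmult_0_r in H0. pose proof (Rabs_pos (Phi (lcomb nil))).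
    apply Rabs_eq_0. lra.
  - assert (Hpi : dual_elem (FF w) (NF w) (fun x => x k)).
    { pose proof (dual_lcomb w ((1, k) :: nil) Hw) as [h1 [h2 [K hK]]].
      split. intros; reflexivity. split. intros; reflexivity.
      exists K. intros x Hx. specialize (hK x Hx). simpl in hK. rewrite Rmult_1_l, Rplus_0_r in hK. auto. }
    replace (lcomb ((a, k) :: cs)) with (fun x => (fun x => a * (fun z => z k) x) x + lcomb cs x)
      by (apply functional_extensionality; intros; reflexivity).
    rewrite Hadd.
    + rewrite (Hsc a (fun z => z k) Hpi). rewrite IH. simpl. reflexivity.
    + destruct Hpi as [p1 [p2 [K pK]]]. split. intros x y Hx Hy. simpl. unfold seq_add. ring.
      split. intros b x Hx. unfold seq_scal. ring.
      exists (Rabs a * K). intros x Hx. rewrite Rabs_mult, Rmult_assoc. apply Rmult_le_compat_l.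
      apply Rabs_pos. apply pK; auto.
    + apply dual_lcomb; auto.
Qed.

Fixpoint wl (w c : nat -> R) (off : nat) (l : list nat) : list (R * nat) :=
  match l with nil => nil | k :: l' => (w off * c k, k) :: wl w c (S off) l' end.

Lemma lcomb_wl w c off l x : lcomb (wl w c off l) x = WSa w (fun k => c k * x k) off l.
Proof. revert off; induction l as [|k l IH]; intros off; simpl. reflexivity. rewrite IH. ring. Qed.

Lemma WSa_abs w a off l : (forall i, 0 <= w i) -> Rabs (WSa w a off l) <= WSa w (fun k => Rabs (a k)) off l.
Proof.
  intros Hw. revert off; induction l as [|k l IH]; intros off; simpl. rewrite Rabs_R0; lra.
  eapply Rle_trans. apply Rabs_triang. rewrite Rabs_mult, (Rabs_pos_eq (w off)) by apply Hw.
  specialize (IH (S off)). lra.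
Qed.

Lemma pt_amgm a b t : 0 < t -> 2 * Rabs (a * b) <= t * (a * a) + / t * (b * b).
Proof.
  intros Ht. rewrite Rabs_mult.
  rewrite <- (Rabs_mult_self_eq a), <- (Rabs_mult_self_eq b).
  set (p := Rabs a). set (q := Rabs b).
  assert (t * (p * p) + / t * (q * q) - 2 * (p * q) = (t * p - q) * (t * p - q) / t) by (field; lra).
  assert (0 <= (t * p - q) * (t * p - q) / t).
  { unfold Rdiv. apply Rmult_le_pos. apply Rle_0_sqr. left; apply Rinv_0_lt_compat; auto. }
  lra.
Qed.

Lemma CS_WS w y x l : wok w -> FF w x -> NoDup l ->
  Rabs (WSa w (fun k => y k * x k) 0 l) <= sqrt (WSa w (sqs y) 0 l) * NF w x.
Proof.
  intros Hw HF Hl.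
  set (P := WSa w (sqs y) 0 l). set (Q := WSa w (sqs x) 0 l).
  assert (HP : 0 <= P) by (apply WSa_nonneg; [apply Hw | apply sqs_nonneg]).
  assert (HQ : 0 <= Q) by (apply WSa_nonneg; [apply Hw | apply sqs_nonneg]).
  assert (H : forall t, 0 < t -> 2 * Rabs (WSa w (fun k => y k * x k) 0 l) <= t * P + Q / t).
  { intros t Ht. eapply Rle_trans. apply Rmult_le_compat_l. lra. apply WSa_abs. apply Hw.
    rewrite <- WSa_scal. unfold P, Q, Rdiv. rewrite (Rmult_comm _ (/ t)). rewrite <- WSa_lin.
    apply WSa_mono. apply Hw. intros k _. unfold sqs. apply pt_amgm; auto. }
  pose proof (amgm_opt P Q _ HP HQ H).
  assert (sqrt Q <= NF w x) by (apply sqrt_le_1_alt; apply L1; auto).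
  pose proof (sqrt_pos P).
  assert (sqrt P * sqrt Q <= sqrt P * NF w x) by (apply Rmult_le_compat_l; auto).
  lra.
Qed.

Lemma bidual_FF w Phi : wok w -> bidual_elem (FF w) (NF w) Phi ->
  FF w (fun k => Phi (fun x => x k)).
Proof.
  intros Hw HPhi. set (y := fun k => Phi (fun x => x k)).
  destruct HPhi as [Hadd [Hsc [C HC]]].
  exists (C * C). intros l Hl.
  set (P := WSa w (sqs y) 0 l).
  assert (HP : 0 <= P) by (apply WSa_nonneg; [apply Hw | apply sqs_nonneg]).
  assert (Hval : Phi (lcomb (wl w y 0 l)) = P).
  { rewrite (Phi_lcomb w Phi Hw (conj Hadd (conj Hsc (ex_intro _ C HC)))).
    rewrite lcomb_wl. reflexivity. }
  assert (Hb : Rabs (Phi (lcomb (wl w y 0 l))) <= C * sqrt P).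
  { apply HC. apply dual_lcomb; auto. intros x Hx. rewrite lcomb_wl. apply CS_WS; auto. }
  rewrite Hval, Rabs_pos_eq in Hb by auto.
  pose proof (sqrt_pos P). pose proof (sqrt_sqrt P HP).
  destruct (Req_dec (sqrt P) 0) as [h|h].
  - rewrite h in H0. assert (0 <= C * C) by apply Rle_0_sqr. fold P. lra.
  - assert (sqrt P <= C).
    { apply (Rmult_le_reg_l (sqrt P)). lra. lra. }
    fold P. rewrite <- H0. apply Rmult_le_compat; lra.
Qed.

Definition wdiv w := forall M, exists n, M < Wsum w 0 n.

Lemma Wsum_nonneg w off n : (forall i, 0 <= w i) -> 0 <= Wsum w off n.
Proof.
  intros Hw. revert off; induction n as [|n IH]; intros off; simpl. lra.
  specialize (IH (S off)). specialize (Hw off). lra.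
Qed.

Lemma Wsum_mono w off n m : (forall i, 0 <= w i) -> (n <= m)%nat -> Wsum w off n <= Wsum w off m.
Proof.
  intros Hw. revert off m; induction n as [|n IH]; intros off m Hnm; simpl.
  - apply Wsum_nonneg; auto.
  - destruct m as [|m]. lia. simpl. specialize (IH (S off) m ltac:(lia)). lra.
Qed.

Lemma FF_c0 w y : wok w -> wdiv w -> FF w y -> forall eta, 0 < eta -> exists N, forall k, (N <= k)%nat -> Rabs (y k) < eta.
Proof.
  intros Hw Hd HF eta He. apply NNPP. intro Hno.
  assert (Hinf : forall N, exists k, (N <= k)%nat /\ eta <= Rabs (y k)).
  { intros N. apply NNPP. intro H2. apply Hno. exists N. intros k Hk.
    destruct (Rlt_or_le (Rabs (y k)) eta) as [h|h]; auto. exfalso. apply H2. exists k; auto. }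
  assert (Hl : forall n, exists l, NoDup l /\ length l = n /\ forall k, In k l -> eta <= Rabs (y k)).
  { intros n. induction n as [|n IH].
    - exists nil. split. constructor. split. reflexivity. intros k [].
    - destruct IH as [l [H1 [H2 H3]]]. destruct (Hinf (list_max l + 1)%nat) as [k [Hk1 Hk2]].
      assert (Hkl : ~ In k l).
      { intro Hin. assert (Hf : List.Forall (fun j => (j <= list_max l)%nat) l) by (apply list_max_le; apply Nat.le_refl).
        rewrite List.Forall_forall in Hf. specialize (Hf _ Hin). lia. }
      exists (k :: l). split. constructor; auto. split. simpl; lia.
      intros j [hj|hj]. subst; auto. auto. }
  destruct (Hd (sq w y / (eta * eta))) as [n Hn].
  destruct (Hl n) as [l [H1 [H2 H3]]].
  assert (eta * eta * Wsum w 0 (length l) <= WSa w (sqs y) 0 l).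
  { apply WSa_lbound. apply Hw. intros k Hk. unfold sqs. rewrite <- (Rabs_mult_self_eq (y k)).
    specialize (H3 k Hk). apply Rmult_le_compat; lra. }
  pose proof (L1 w y HF l H1). rewrite H2 in H.
  assert (Hee : 0 < eta * eta) by (apply Rmult_lt_0_compat; auto).
  assert (sq w y < eta * eta * Wsum w 0 n).
  { apply (Rmult_lt_compat_l (eta * eta)) in Hn; auto.
    replace (eta * eta * (sq w y / (eta * eta))) with (sq w y) in Hn by (field; lra). auto. }
  lra.
Qed.

Lemma WSa_filter w a p off l : wdec w -> (forall k, 0 <= a k) -> (forall k, In k l -> p k = false -> a k = 0) ->
  WSa w a off l <= WSa w a off (filter p l).
Proof.
  intros Hw Ha. revert off; induction l as [|k l IH]; intros off Hz; simpl. lra.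
  destruct (p k) eqn:Ep; simpl.
  - assert (WSa w a (S off) l <= WSa w a (S off) (filter p l)) by (apply IH; intros j Hj; apply Hz; simpl; auto).
    lra.
  - rewrite (Hz k (or_introl eq_refl) Ep). rewrite Rmult_0_r, Rplus_0_l.
    eapply Rle_trans. apply IH. intros j Hj; apply Hz; simpl; auto.
    apply WSa_off_mono; auto.
Qed.

Lemma tail_val y M k : seq_sub y (trunc y M) k = if Nat.ltb k M then 0 else y k.
Proof. unfold seq_sub. rewrite trunc_val. destruct (Nat.ltb k M); ring. Qed.

Lemma OC w y : wok w -> wdiv w -> FF w y -> forall eps, 0 < eps -> exists M, forall M', (M <= M')%nat ->
  FF w (seq_sub y (trunc y M')) /\ sq w (seq_sub y (trunc y M')) <= eps.
Proof.
  intros Hw Hd HF eps He.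
  destruct (L2 w y (eps / 2) HF ltac:(lra)) as [l0 [Hl0 Hl0v]].
  set (m := length l0).
  pose proof (Wsum_nonneg w 0 m (proj1 (proj1 Hw))) as HW.
  set (eta := eps / 2 / (Wsum w 0 m + 1)).
  assert (Heta : 0 < eta) by (unfold eta; apply Rdiv_lt_0_compat; lra).
  assert (Heta2 : eta * Wsum w 0 m <= eps / 2).
  { unfold eta. apply (Rmult_le_reg_r (Wsum w 0 m + 1)). lra.
    unfold Rdiv. replace (eps * / 2 * / (Wsum w 0 m + 1) * Wsum w 0 m * (Wsum w 0 m + 1)) with (eps * / 2 * Wsum w 0 m) by (field; lra).
    assert (0 <= eps * / 2) by lra. nra. }
  destruct (FF_c0 w y Hw Hd HF (Rmin 1 eta) ltac:(apply Rmin_glb_lt; lra)) as [N HN].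
  exists (Nat.max N (list_max l0 + 1)). intros M' HM'.
  set (t := seq_sub y (trunc y M')).
  assert (Ht : forall k, t k = if Nat.ltb k M' then 0 else y k) by (intros; apply tail_val).
  assert (Hsmall : forall k, (M' <= k)%nat -> sqs y k <= eta).
  { intros k Hk. specialize (HN k ltac:(lia)). unfold sqs. rewrite <- (Rabs_mult_self_eq (y k)).
    pose proof (Rabs_pos (y k)). pose proof (Rmin_l 1 eta). pose proof (Rmin_r 1 eta).
    assert (Rabs (y k) * Rabs (y k) <= Rabs (y k) * 1) by (apply Rmult_le_compat_l; lra). lra. }
  apply L3. intros l Hl.
  set (l' := filter (fun k => Nat.leb M' k) l).
  assert (Hl'nd : NoDup l') by (apply NoDup_filter; auto).
  assert (Hl'in : forall k, In k l' -> (M' <= k)%nat).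
  { intros k Hk. apply filter_In in Hk. destruct Hk as [_ Hk]. apply Nat.leb_le; auto. }
  assert (Hstep1 : WSa w (sqs t) 0 l <= WSa w (sqs t) 0 l').
  { apply WSa_filter. apply Hw. apply sqs_nonneg. intros k _ Hk. unfold sqs. rewrite Ht.
    apply Nat.leb_gt in Hk. destruct (Nat.ltb_spec k M'); [ring | lia]. }
  assert (Hty : forall k, In k l' -> sqs t k = sqs y k).
  { intros k Hk. unfold sqs. rewrite Ht. specialize (Hl'in k Hk). destruct (Nat.ltb_spec k M'); [lia|reflexivity]. }
  assert (Hfirst : forall s, (forall k, In k s -> In k l') -> (length s <= m)%nat -> WSa w (sqs t) 0 s <= eps / 2).
  { intros s Hs Hlen. eapply Rle_trans. apply (WSa_bound w _ 0 s eta). apply Hw.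
    intros k Hk. rewrite Hty by auto. apply Hsmall. apply Hl'in; auto.
    eapply Rle_trans; [|apply Heta2]. apply Rmult_le_compat_l. lra. apply Wsum_mono; auto. apply Hw. }
  eapply Rle_trans. apply Hstep1.
  destruct (Nat.le_gt_cases (length l') m) as [hlen|hlen].
  - eapply Rle_trans. apply Hfirst; auto. lra.
  - rewrite <- (firstn_skipn m l'). rewrite WSa_app.
    rewrite firstn_length_le by lia.
    assert (Hin1 : forall k, In k (firstn m l') -> In k l').
    { intros k Hk. rewrite <- (firstn_skipn m l'). apply in_or_app; left; auto. }
    assert (Hin2 : forall k, In k (skipn m l') -> In k l').
    { intros k Hk. rewrite <- (firstn_skipn m l'). apply in_or_app; right; auto. }
    assert (H1 : WSa w (sqs t) 0 (firstn m l') <= eps / 2).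
    { apply Hfirst. auto. rewrite firstn_length_le by lia. lia. }
    assert (H2 : WSa w (sqs t) (0 + m) (skipn m l') = WSa w (sqs y) m (skipn m l')).
    { apply WSa_ext. intros k Hk. apply Hty. auto. }
    assert (Hnds : NoDup (skipn m l')).
    { apply (NoDup_app_remove_l (firstn m l')). rewrite firstn_skipn. auto. }
    assert (Hnd2 : NoDup (l0 ++ skipn m l')).
    { apply NoDup_app; auto. intros a Ha Ha2.
      assert (Hf : List.Forall (fun j => (j <= list_max l0)%nat) l0) by (apply list_max_le; apply Nat.le_refl).
      rewrite List.Forall_forall in Hf. specialize (Hf _ Ha). specialize (Hl'in a (Hin2 a Ha2)). lia. }
    pose proof (L1 w y HF _ Hnd2) as H3. rewrite WSa_app in H3. fold m in H3. simpl in H3.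
    rewrite H2. lra.
Qed.


Lemma f_sub w f x y : wok w -> dual_elem (FF w) (NF w) f -> FF w x -> FF w y ->
  f (seq_sub x y) = f x - f y.
Proof.
  intros Hw [Ha [Hs _]] Hx Hy.
  assert (E : seq_sub x y = seq_add x (seq_scal (-1) y)).
  { apply functional_extensionality; intros k. unfold seq_sub, seq_add, seq_scal. ring. }
  rewrite E, Ha; auto. rewrite Hs; auto. ring. exact (proj1 (FF_scal w y (-1) Hy)).
Qed.

Lemma f_zero_seq w f x : wok w -> dual_elem (FF w) (NF w) f -> FF w x -> (forall k, x k = 0) -> f x = 0.
Proof.
  intros Hw [Ha [Hs _]] Hx H0.
  assert (E : x = seq_scal 0 x).
  { apply functional_extensionality; intros k. unfold seq_scal. rewrite H0. ring. }
  rewrite E, Hs; auto. ring.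
Qed.

Fixpoint glist (f : rseq -> R) (N : nat) : list (R * nat) :=
  match N with O => nil | S n => (f (unitv n), n) :: glist f n end.

Lemma f_trunc w f x N : wok w -> dual_elem (FF w) (NF w) f -> f (trunc x N) = lcomb (glist f N) x.
Proof.
  intros Hw Hf. pose proof Hf as [Ha [Hs _]]. induction N as [|n IH].
  - simpl. apply (f_zero_seq w f seq_zero Hw Hf (proj1 (FF_zero w Hw))). intros; reflexivity.
  - simpl trunc. simpl glist. simpl lcomb.
  - assert (H1 : FF w (trunc x n)) by (apply FF_trunc; auto).
    assert (H2 : FF w (seq_scal (x n) (unitv n))) by exact (proj1 (FF_scal w _ _ (FF_unitv w n Hw))).
    rewrite (Ha _ _ H1 H2). rewrite (Hs _ _ (FF_unitv w n Hw)). rewrite IH. ring.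
Qed.

Lemma hump w f : wok w -> wdiv w -> dual_elem (FF w) (NF w) f ->
  forall eps, 0 < eps -> exists N, forall x, FF w x -> (forall k, (k < N)%nat -> x k = 0) ->
    Rabs (f x) <= eps * NF w x.
Proof.
  intros Hw Hd Hf eps He. pose proof Hf as [Ha [Hs [K HK]]].
  apply NNPP. intro Hno.
  assert (Hex : forall N, exists x, FF w x /\ (forall k, (k < N)%nat -> x k = 0) /\ eps * NF w x < Rabs (f x)).
  { intros N. apply NNPP. intro H2. apply Hno. exists N. intros x Hx Hz.
    destruct (Rle_or_lt (Rabs (f x)) (eps * NF w x)) as [h|h]; auto. exfalso. apply H2. exists x; auto. }
  assert (Hblock : forall N, exists b, FF w b /\ (forall k, (k < N)%nat -> b k = 0) /\
            (exists M, forall k, (M <= k)%nat -> b k = 0) /\ sq w b <= 1 /\ eps < f b).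
  { intros N. destruct (Hex N) as [x [Hx [Hz Hlt]]].
    pose proof (NF_nonneg w x) as Hn0.
    assert (Hpos : 0 < NF w x).
    { destruct (Req_dec (NF w x) 0) as [h|h]; [|lra]. exfalso.
      rewrite (f_zero_seq w f x Hw Hf Hx (NF_zero w x Hw Hx h)) in Hlt. rewrite h, Rabs_R0 in Hlt. lra. }
    set (x1 := seq_scal (/ NF w x) x).
    assert (Hx1 : FF w x1) by exact (proj1 (FF_scal w _ _ Hx)).
    assert (HN1 : NF w x1 = 1).
    { unfold x1. rewrite NF_scal by auto. rewrite Rabs_pos_eq. field; lra. left; apply Rinv_0_lt_compat; auto. }
    assert (Hsq1 : sq w x1 = 1) by (rewrite <- NF_sq by auto; rewrite HN1; ring).
    assert (Hf1 : eps < Rabs (f x1)).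
    { unfold x1. rewrite Hs by auto. rewrite Rabs_mult, Rabs_pos_eq by (left; apply Rinv_0_lt_compat; auto).
      apply (Rmult_lt_reg_l (NF w x)); auto. rewrite <- Rmult_assoc, Rinv_r by lra. lra. }
    set (d := (Rabs (f x1) - eps) / (2 * (Rabs K + 1))).
    pose proof (Rabs_pos K) as HK0.
    assert (Hd0 : 0 < d) by (unfold d; apply Rdiv_lt_0_compat; lra).
    destruct (OC w x1 Hw Hd Hx1 (d * d) ltac:(apply Rmult_lt_0_compat; auto)) as [M0 HM0].
    set (M := Nat.max M0 N).
    destruct (HM0 M ltac:(lia)) as [Ht Hsqt].
    set (t := seq_sub x1 (trunc x1 M)) in *.
    set (b0 := trunc x1 M).
    assert (Hb0 : FF w b0) by apply FF_trunc, Hw.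
    assert (HNt : NF w t <= d).
    { pose proof (NF_nonneg w t). rewrite <- NF_sq in Hsqt by auto.
      destruct (Rle_or_lt (NF w t) d); auto. assert (d * d < NF w t * NF w t) by (apply Rmult_le_0_lt_compat; lra). lra. }
    assert (Hft : Rabs (f t) <= Rabs K * d).
    { eapply Rle_trans. apply HK; auto. eapply Rle_trans. apply Rmult_le_compat_r. apply NF_nonneg. apply Rle_abs.
      apply Rmult_le_compat_l; auto. }
    assert (Hftv : f t = f x1 - f b0) by (apply (f_sub w); auto).
    assert (HKd : Rabs K * d < Rabs (f x1) - eps).
    { unfold d. apply (Rmult_lt_reg_r (2 * (Rabs K + 1))). lra.
      replace (Rabs K * ((Rabs (f x1) - eps) / (2 * (Rabs K + 1))) * (2 * (Rabs K + 1))) with (Rabs K * (Rabs (f x1) - eps)) by (field; lra).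
      nra. }
    assert (Hfb0 : eps < Rabs (f b0)).
    { pose proof (Rabs_triang_inv (f x1) (f b0)). replace (f x1 - f b0) with (f t) in H by lra. lra. }
    assert (Hz0 : forall k, (k < N)%nat -> b0 k = 0).
    { intros k Hk. unfold b0. rewrite trunc_val. destruct (Nat.ltb k M). unfold x1, seq_scal. rewrite Hz; auto. ring. auto. }
    assert (Hz1 : forall k, (M <= k)%nat -> b0 k = 0).
    { intros k Hk. unfold b0. rewrite trunc_val. destruct (Nat.ltb_spec k M); [lia|auto]. }
    assert (Hsqb0 : sq w b0 <= 1).
    { rewrite <- Hsq1. apply (FF_dom w b0 x1 Hw Hx1). intros k. unfold b0. rewrite trunc_val.
      destruct (Nat.ltb k M). lra. rewrite Rabs_R0. apply Rabs_pos. }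
    destruct (Rle_or_lt 0 (f b0)) as [hs|hs].
    - exists b0. split; auto. split; auto. split. exists M; auto. split; auto. rewrite Rabs_pos_eq in Hfb0; auto.
    - exists (seq_scal (-1) b0). split. exact (proj1 (FF_scal w _ _ Hb0)).
      split. intros k Hk. unfold seq_scal. rewrite Hz0; auto. ring.
      split. exists M. intros k Hk. unfold seq_scal. rewrite Hz1; auto. ring.
      split. rewrite sq_scal by auto. lra.
      rewrite Hs by auto. rewrite Rabs_left in Hfb0 by auto. lra. }
  assert (Hacc : forall m : nat, exists z, FF w z /\ (exists N, forall k, (N <= k)%nat -> z k = 0) /\
            sq w z <= INR m /\ INR m * eps <= f z).
  { intros m. induction m as [|m IH].
    - exists seq_zero. split. exact (proj1 (FF_zero w Hw)). split. exists 0%nat. intros; reflexivity.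
      split. simpl. exact (proj2 (FF_zero w Hw)).
      rewrite (f_zero_seq w f seq_zero Hw Hf (proj1 (FF_zero w Hw))) by (intros; reflexivity). simpl. lra.
    - destruct IH as [z [Hz [[N HN] [Hsqz Hfz]]]].
      destruct (Hblock N) as [b [Hb [Hb1 [[M HM] [Hsqb Hfb]]]]].
      exists (seq_add z b). split. apply FF_add; auto. split.
      + exists (Nat.max N M). intros k Hk. unfold seq_add. rewrite HN, HM by lia. ring.
      + split.
        * rewrite S_INR. refine (proj2 (L3 w (seq_add z b) (INR m + 1) _)). intros l Hl.
          assert (E : WSa w (sqs (seq_add z b)) 0 l = WSa w (fun k => 1 * sqs z k + 1 * sqs b k) 0 l).
          { apply WSa_ext. intros k _. unfold sqs, seq_add.
            destruct (Nat.lt_ge_cases k N) as [h|h]. rewrite Hb1 by auto. ring. rewrite HN by auto. ring. }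
          rewrite E, WSa_lin. pose proof (L1 w z Hz l Hl). pose proof (L1 w b Hb l Hl). lra.
        * rewrite Ha by auto. rewrite S_INR. lra. }
  pose proof (Rabs_pos K) as HK0.
  destruct (nat_unbounded ((Rabs K + 1) * (Rabs K + 1) / (eps * eps))) as [m Hm].
  destruct (Hacc m) as [z [Hz [_ [Hsqz Hfz]]]].
  assert (Hee : 0 < eps * eps) by (apply Rmult_lt_0_compat; auto).
  assert (Hm' : (Rabs K + 1) * (Rabs K + 1) < INR m * (eps * eps)).
  { apply (Rmult_lt_compat_r (eps * eps)) in Hm; auto. unfold Rdiv in Hm.
    rewrite Rmult_assoc, Rinv_l in Hm by lra. lra. }
  assert (Hfz2 : f z <= Rabs K * NF w z).
  { eapply Rle_trans. apply Rle_abs. eapply Rle_trans. apply HK; auto.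
    apply Rmult_le_compat_r. apply NF_nonneg. apply Rle_abs. }
  assert (HNz : NF w z <= sqrt (INR m)) by (unfold NF; apply sqrt_le_1_alt; auto).
  pose proof (pos_INR m) as Hm0.
  pose proof (sqrt_sqrt (INR m) Hm0) as Hsm. pose proof (sqrt_pos (INR m)) as Hsp.
  set (s := sqrt (INR m)) in *.
  assert (Hc : s * s * eps <= Rabs K * s).
  { eapply Rle_trans. rewrite Hsm. apply Hfz. eapply Rle_trans. apply Hfz2. apply Rmult_le_compat_l; auto. }
  assert (Hs0 : 0 < s).
  { destruct (Req_dec s 0) as [h|h]; [|lra]. rewrite h in Hsm. rewrite <- Hsm in Hm'. nra. }
  assert (s * eps <= Rabs K).
  { apply (Rmult_le_reg_l s); auto. lra. }
  assert (s * eps * (s * eps) <= (Rabs K + 1) * (Rabs K + 1)).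
  { apply Rmult_le_compat; try lra. apply Rmult_le_pos; lra. apply Rmult_le_pos; lra. }
  replace (s * eps * (s * eps)) with (s * s * (eps * eps)) in H0 by ring. rewrite Hsm in H0. lra.
Qed.

Lemma small_zero d c : 0 <= c -> (forall eps, 0 < eps -> Rabs d <= c * eps) -> d = 0.
Proof.
  intros Hc H. apply Rabs_eq_0. pose proof (Rabs_pos d).
  destruct (Req_dec (Rabs d) 0) as [h|h]; auto. exfalso.
  assert (Hp : 0 < Rabs d) by lra.
  specialize (H (Rabs d / (2 * (c + 1))) ltac:(apply Rdiv_lt_0_compat; lra)).
  assert (c * (Rabs d / (2 * (c + 1))) < Rabs d).
  { apply (Rmult_lt_reg_r (2 * (c + 1))). lra.
    replace (c * (Rabs d / (2 * (c + 1))) * (2 * (c + 1))) with (c * Rabs d) by (field; lra). nra. }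
  lra.
Qed.

Lemma F_reflexive w : wok w -> wdiv w -> reflexive (FF w) (NF w).
Proof.
  intros Hw Hd Phi HPhi.
  set (y := fun k => Phi (fun x => x k)).
  assert (Hy : FF w y) by (apply bidual_FF; auto).
  exists y. split; auto. intros f Hf.
  pose proof HPhi as [Padd [Psc [C HC]]].
  pose proof Hf as [Fa [Fs [K HK]]].
  apply Rminus_diag_uniq. apply (small_zero _ (Rabs C + Rabs K)).
  { pose proof (Rabs_pos C); pose proof (Rabs_pos K); lra. }
  intros eps He.
  destruct (hump w f Hw Hd Hf eps He) as [N1 HN1].
  destruct (OC w y Hw Hd Hy (eps * eps) ltac:(apply Rmult_lt_0_compat; auto)) as [M HM].
  set (N := Nat.max N1 M).
  set (cs := glist f N).
  set (h := fun x => f x - lcomb cs x).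
  assert (Htail : forall x, FF w x -> FF w (seq_sub x (trunc x N))) by (intros; apply FF_sub; auto; apply FF_trunc; auto).
  assert (Hhv : forall x, FF w x -> h x = f (seq_sub x (trunc x N))).
  { intros x Hx. unfold h. rewrite (f_sub w f x (trunc x N) Hw Hf Hx (FF_trunc w x N Hw)).
    unfold cs. rewrite (f_trunc w f x N Hw Hf). reflexivity. }
  assert (Hhb : forall x, FF w x -> Rabs (h x) <= eps * NF w x).
  { intros x Hx. rewrite Hhv by auto. eapply Rle_trans. apply HN1. apply Htail; auto.
    intros k Hk. rewrite tail_val. destruct (Nat.ltb_spec k N); [reflexivity | lia].
    apply Rmult_le_compat_l. lra. apply NF_mono. apply Htail; auto.
    apply (FF_dom w _ x Hw Hx). intros k. rewrite tail_val. destruct (Nat.ltb k N). rewrite Rabs_R0. apply Rabs_pos. lra. }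
  assert (Hhd : dual_elem (FF w) (NF w) h).
  { split. intros x1 x2 H1 H2. unfold h. rewrite Fa, lcomb_add by auto. ring.
    split. intros a x Hx. unfold h. rewrite Fs, lcomb_scal by auto. ring.
    exists eps. auto. }
  assert (HPh : Rabs (Phi h) <= C * eps).
  { apply HC. exact Hhd. intros x Hx. apply Hhb; auto. }
  assert (Ef : f = fun x => h x + lcomb cs x).
  { apply functional_extensionality. intros x. unfold h. ring. }
  assert (HPf : Phi f = Phi h + lcomb cs y).
  { rewrite Ef at 1. rewrite Padd; auto. 2: apply dual_lcomb; auto.
    rewrite (Phi_lcomb w Phi Hw HPhi cs). reflexivity. }
  assert (Hfy : f y = lcomb cs y + f (seq_sub y (trunc y N))).
  { rewrite (f_sub w f y (trunc y N) Hw Hf Hy (FF_trunc w y N Hw)). unfold cs. rewrite (f_trunc w f y N Hw Hf). ring. }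
  destruct (HM N ltac:(lia)) as [Hty Hsqt].
  assert (HNt : NF w (seq_sub y (trunc y N)) <= eps).
  { pose proof (NF_nonneg w (seq_sub y (trunc y N))). rewrite <- NF_sq in Hsqt by auto.
    destruct (Rle_or_lt (NF w (seq_sub y (trunc y N))) eps); auto.
    assert (eps * eps < NF w (seq_sub y (trunc y N)) * NF w (seq_sub y (trunc y N))) by (apply Rmult_le_0_lt_compat; lra). lra. }
  assert (Hft : Rabs (f (seq_sub y (trunc y N))) <= Rabs K * eps).
  { eapply Rle_trans. apply HK; auto. eapply Rle_trans. apply Rmult_le_compat_r. apply NF_nonneg. apply Rle_abs.
    apply Rmult_le_compat_l; auto. apply Rabs_pos. }
  rewrite HPf, Hfy.
  replace (Phi h + lcomb cs y - (lcomb cs y + f (seq_sub y (trunc y N)))) with (Phi h - f (seq_sub y (trunc y N))) by ring.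
  eapply Rle_trans. apply Rabs_triang. rewrite Rabs_Ropp.
  assert (C * eps <= Rabs C * eps) by (apply Rmult_le_compat_r; [lra | apply Rle_abs]).
  lra.
Qed.

Fixpoint wsumB (w : nat -> R) (n : nat) : R := match n with O => 0 | S n' => wsumB w n' + w n' end.
Fixpoint wbsum (w b : nat -> R) (n : nat) : R := match n with O => 0 | S n' => wbsum w b n' + w n' * b n' end.

Lemma Wsum_S w off n : Wsum w off (S n) = Wsum w off n + w (off + n)%nat.
Proof.
  revert off; induction n as [|n IH]; intros off; simpl.
  - rewrite Nat.add_0_r. ring.
  - simpl in IH. rewrite IH. replace (S off + n)%nat with (off + S n)%nat by lia. ring.
Qed.

Lemma Wsum_B w n : Wsum w 0 n = wsumB w n.
Proof. induction n as [|n IH]. reflexivity. rewrite Wsum_S. simpl. rewrite IH. reflexivity. Qed.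

Lemma b_le (b : nat -> R) i j : (forall i, b (S i) <= b i) -> (i <= j)%nat -> b j <= b i.
Proof. intros Hb H. induction H. lra. specialize (Hb m). lra. Qed.

Fixpoint LL (tau : nat -> nat) (j : nat) : nat :=
  match j with O => S (tau 1%nat) | S j' => S (Nat.max (LL tau j') (tau (S (S j')))) end.

Fixpoint st (tau : nat -> nat) (i : nat) : nat * nat :=
  match i with
  | O => (0%nat, 0%nat)
  | S i' => let (j, r) := st tau i' in
            if Nat.ltb (S r) (LL tau j) then (j, S r) else (S j, 0%nat)
  end.

Lemma LL_ge tau j : (S (tau (S j)) <= LL tau j)%nat.
Proof. destruct j; simpl; lia. Qed.

Lemma LL_mono tau j j' : (j <= j')%nat -> (LL tau j <= LL tau j')%nat.
Proof. intros H. induction H. lia. simpl. lia. Qed.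

Lemma weights (b : nat -> R) : (forall i, 0 < b i) -> (forall i, b (S i) <= b i) ->
  (forall eps, 0 < eps -> exists n, b n < eps) ->
  exists w, wok w /\ wdiv w /\ forall n, wbsum w b n <= 2 * b 0%nat.
Proof.
  intros Hpos Hdec Hlim.
  assert (Hex : forall j : nat, exists n, b n <= b 0%nat * (/ 2) ^ j).
  { intros j. destruct (Hlim (b 0%nat * (/ 2) ^ j)) as [n Hn].
    apply Rmult_lt_0_compat. apply Hpos. apply pow_lt. lra.
    exists n. lra. }
  set (tau := fun j => proj1_sig (constructive_indefinite_description _ (Hex j))).
  assert (Htau : forall j, b (tau j) <= b 0%nat * (/ 2) ^ j).
  { intros j. unfold tau. destruct (constructive_indefinite_description _ (Hex j)). simpl. auto. }
  set (w := fun i => / INR (LL tau (fst (st tau i)))).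
  assert (HL0 : forall j, (0 < LL tau j)%nat) by (intros j; destruct j; simpl; lia).
  assert (HLpos : forall j, 0 < INR (LL tau j)) by (intros j; apply lt_0_INR; auto).
  set (h := / 2).
  assert (Inv : forall i, let (j, r) := st tau i in
     (r < LL tau j)%nat /\ (r <= i)%nat /\ b i <= b 0%nat * h ^ j /\
     wsumB w i = INR j + INR r / INR (LL tau j) /\
     wbsum w b i <= b 0%nat * (2 - 2 * h ^ j + h ^ j * (INR r / INR (LL tau j)))).
  { induction i as [|i IH].
    - simpl. split. lia. split. lia. split. simpl; lra. split. unfold Rdiv; ring.
      unfold Rdiv. simpl. pose proof (Hpos 0%nat). lra.
    - simpl. destruct (st tau i) as [j r] eqn:Est.
      destruct IH as [I1 [I2 [I3 [I4 I5]]]].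
      assert (Hwi : w i = / INR (LL tau j)) by (unfold w; rewrite Est; reflexivity).
      assert (Hbi : 0 < b i) by apply Hpos.
      assert (Hhj : 0 < h ^ j) by (apply pow_lt; unfold h; lra).
      destruct (Nat.ltb_spec (S r) (LL tau j)) as [hlt|hge].
      + split. auto. split. lia. split. pose proof (Hdec i). lra.
        split. rewrite I4, Hwi, S_INR. field. apply Rgt_not_eq, HLpos.
        rewrite Hwi, S_INR.
        assert (/ INR (LL tau j) * b i <= / INR (LL tau j) * (b 0%nat * h ^ j)).
        { apply Rmult_le_compat_l. left; apply Rinv_0_lt_compat; auto. auto. }
        replace (b 0%nat * (2 - 2 * h ^ j + h ^ j * ((INR r + 1) / INR (LL tau j)))) with
          (b 0%nat * (2 - 2 * h ^ j + h ^ j * (INR r / INR (LL tau j))) + / INR (LL tau j) * (b 0%nat * h ^ j))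
          by (field; apply Rgt_not_eq, HLpos).
        lra.
      + assert (Hr : S r = LL tau j) by lia.
        split. pose proof (HL0 (S j)). simpl in H |- *. lia. split. lia.
        split.
        { assert (Ht : (tau (S j) <= S i)%nat) by (pose proof (LL_ge tau j); lia).
          pose proof (b_le b _ _ Hdec Ht). pose proof (Htau (S j)). fold h in H0. lra. }
        split.
        { rewrite I4, Hwi. rewrite S_INR. change (INR 0) with 0.
          replace (INR r) with (INR (LL tau j) - 1) by (rewrite <- Hr, S_INR; ring).
          field. split; apply Rgt_not_eq, HLpos. }
        rewrite Hwi.
        assert (/ INR (LL tau j) * b i <= / INR (LL tau j) * (b 0%nat * h ^ j)).
        { apply Rmult_le_compat_l. left; apply Rinv_0_lt_compat; auto. auto. }
        replace (INR r) with (INR (LL tau j) - 1) in I5 by (rewrite <- Hr, S_INR; ring).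
        change (INR 0) with 0. simpl pow.
        assert (E1 : b 0%nat * (2 - 2 * h ^ j + h ^ j * ((INR (LL tau j) - 1) / INR (LL tau j))) + / INR (LL tau j) * (b 0%nat * h ^ j)
                 = b 0%nat * (2 - 2 * (h * h ^ j) + h * h ^ j * (0 / INR (LL tau (S j))))).
        { unfold h. field. split; apply Rgt_not_eq, HLpos. }
        lra. }
  exists w. split; [split; [split|] | split].
  - intros i. unfold w. left. apply Rinv_0_lt_compat. apply HLpos.
  - intros i. unfold w.
    assert (E : st tau (S i) = (let (j, r) := st tau i in if Nat.ltb (S r) (LL tau j) then (j, S r) else (S j, 0%nat))) by reflexivity.
    rewrite E. destruct (st tau i) as [j r].
    destruct (Nat.ltb_spec (S r) (LL tau j)); cbn [fst].
    + lra.
    + apply Rinv_le_contravar. apply HLpos. apply le_INR. apply LL_mono. lia.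
  - unfold w. apply Rinv_0_lt_compat. apply HLpos.
  - intros M. apply NNPP. intro Hno.
    assert (HM : forall n, wsumB w n <= M).
    { intros n. rewrite <- Wsum_B. destruct (Rle_or_lt (Wsum w 0 n) M); auto. exfalso. apply Hno. exists n; auto. }
    destruct (nat_unbounded M) as [J0 HJ0].
    assert (Hw : forall i, / INR (LL tau J0) <= w i).
    { intros i. pose proof (Inv i) as Ii. unfold w. destruct (st tau i) as [j r]. simpl.
      destruct Ii as [_ [_ [_ [I4 _]]]].
      assert (INR j <= M).
      { pose proof (HM i). rewrite I4 in H.
        assert (0 <= INR r / INR (LL tau j)) by (apply Rdiv_le_0_compat; [apply pos_INR | apply HLpos]). lra. }
      assert (j <= J0)%nat.
      { destruct (Nat.le_gt_cases j J0); auto. apply lt_INR in H0. lra. }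
      apply Rinv_le_contravar. apply HLpos. apply le_INR. apply LL_mono. auto. }
    set (c := / INR (LL tau J0)).
    assert (Hc : 0 < c) by (apply Rinv_0_lt_compat; apply HLpos).
    assert (Hlow : forall n, INR n * c <= wsumB w n).
    { induction n as [|n IH]. simpl. lra. simpl wsumB. rewrite S_INR. pose proof (Hw n). fold c in H. lra. }
    destruct (nat_unbounded (M / c)) as [n Hn].
    pose proof (Hlow n). pose proof (HM n).
    assert (M < INR n * c).
    { apply (Rmult_lt_compat_r c) in Hn; auto. unfold Rdiv in Hn. rewrite Rmult_assoc, Rinv_l in Hn by lra. lra. }
    lra.
  - intros n. pose proof (Inv n) as In. destruct (st tau n) as [j r].
    destruct In as [I1 [_ [_ [_ I5]]]].
    assert (Hhj : 0 < h ^ j) by (apply pow_lt; unfold h; lra).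
    assert (INR r / INR (LL tau j) <= 1).
    { apply (Rmult_le_reg_r (INR (LL tau j))). apply HLpos. unfold Rdiv. rewrite Rmult_assoc, Rinv_l.
      rewrite Rmult_1_r, Rmult_1_l. apply le_INR. lia. apply Rgt_not_eq, HLpos. }
    assert (h ^ j * (INR r / INR (LL tau j)) <= h ^ j) by (rewrite <- Rmult_1_r; apply Rmult_le_compat_l; lra).
    pose proof (Hpos 0%nat).
    assert (b 0%nat * (2 - 2 * h ^ j + h ^ j * (INR r / INR (LL tau j))) <= b 0%nat * 2) by (apply Rmult_le_compat_l; lra).
    lra.
Qed.

Ltac destrE HE := let Ez := fresh "Ez" in let Eadd := fresh "Eadd" in let Escal := fresh "Escal" in
  let Ebdd := fresh "Ebdd" in let Npos := fresh "Npos" in let Nzero := fresh "Nzero" in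
  let Nscal := fresh "Nscal" in let Ntri := fresh "Ntri" in let Ecomp := fresh "Ecomp" in
  let Esym := fresh "Esym" in
  destruct HE as [Ez [Eadd [Escal [Ebdd [Npos [Nzero [Nscal [Ntri [Ecomp Esym]]]]]]]]].

Lemma lattice E N x y : symmetric_seq_space E N -> bounded_seq x -> E y ->
  (forall k, Rabs (x k) <= Rabs (y k)) -> E x /\ N x <= N y.
Proof.
  intros HE Hb Hy H. pose proof HE as HE'. destrE HE'.
  apply Esym; auto. intros n. apply mu_mono_pt; auto.
Qed.

Lemma unit_mu_le a b j : mu (unitv a) j <= mu (unitv b) j.
Proof.
  assert (Hba : forall c, bounded_seq (unitv c)).
  { intros c. exists 1. intros k. unfold unitv. destruct (Nat.eqb k c); rewrite ?Rabs_R1, ?Rabs_R0; lra. }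
  destruct j as [|j].
  - eapply Rle_trans. apply (mu_fin_le _ 1). apply Hba. lra.
    intros k. unfold unitv. destruct (Nat.eqb k a); rewrite ?Rabs_R1, ?Rabs_R0; lra.
    eapply Rle_trans; [|apply (mu_ge_abs _ b (Hba b))]. unfold unitv. rewrite Nat.eqb_refl, Rabs_R1. lra.
  - eapply Rle_trans. apply (mu_fin_zero _ (a :: nil)). apply Hba.
    intros k Hk. unfold unitv. destruct (Nat.eqb_spec k a). subst; simpl in Hk; tauto. reflexivity.
    simpl; lia. apply mu_nonneg. apply Hba.
Qed.

Lemma unit_in_E E N x0 k0 : symmetric_seq_space E N -> E x0 -> x0 k0 <> 0 -> forall n, E (unitv n).
Proof.
  intros HE Hx0 Hk0 n. pose proof HE as HE'. destrE HE'.
  set (a := Rabs (x0 k0)). assert (Ha : 0 < a) by (apply Rabs_pos_lt; auto).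
  set (z := seq_scal a (unitv n)).
  assert (Hzb : forall k, Rabs (z k) <= a).
  { intros k. unfold z, seq_scal, unitv. destruct (Nat.eqb k n); rewrite Rabs_mult, Rabs_pos_eq by lra;
    rewrite ?Rabs_R1, ?Rabs_R0; lra. }
  assert (Hbz : bounded_seq z) by (exists a; auto).
  assert (Hz : E z).
  { apply (Esym z x0 Hbz Hx0). intros j. destruct j as [|j].
    - eapply Rle_trans. apply (mu_fin_le _ a); auto. lra. apply mu_ge_abs; auto.
    - eapply Rle_trans. apply (mu_fin_zero _ (n :: nil)); auto.
      intros k Hk. unfold z, seq_scal, unitv. destruct (Nat.eqb_spec k n). subst; simpl in Hk; tauto. ring.
      simpl; lia. apply mu_nonneg; auto. }
  assert (Eu : unitv n = seq_scal (/ a) z).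
  { apply functional_extensionality. intros k. unfold z, seq_scal. field. lra. }
  rewrite Eu. apply Escal; auto.
Qed.

Definition ind n := trunc (fun _ => 1) n.

Lemma ind_val n k : ind n k = if Nat.ltb k n then 1 else 0.
Proof. unfold ind. rewrite trunc_val. reflexivity. Qed.

Lemma ind_abs n k : Rabs (ind n k) <= 1.
Proof. rewrite ind_val. destruct (Nat.ltb k n); rewrite ?Rabs_R1, ?Rabs_R0; lra. Qed.

Lemma trunc_in_E E N x : symmetric_seq_space E N -> (forall n, E (unitv n)) -> forall n, E (trunc x n).
Proof.
  intros HE Hu n. pose proof HE as HE'. destrE HE'. induction n as [|n IH]; simpl; auto.
Qed.

Lemma E2 E N x i : symmetric_seq_space E N -> (forall n, E (unitv n)) -> E x ->
  mu x i * N (ind (S i)) <= N x.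
Proof.
  intros HE Hu Hx. pose proof HE as HE'. destrE HE'.
  pose proof (Ebdd x Hx) as Hbx. pose proof (mu_nonneg x i Hbx) as Hm0.
  set (z := seq_scal (mu x i) (ind (S i))).
  assert (Hzb : forall k, Rabs (z k) <= mu x i).
  { intros k. unfold z, seq_scal. rewrite Rabs_mult, Rabs_pos_eq by auto. pose proof (ind_abs (S i) k).
    rewrite <- (Rmult_1_r (mu x i)) at 2. apply Rmult_le_compat_l; auto. }
  assert (Hbz : bounded_seq z) by (exists (mu x i); auto).
  assert (Hind : E (ind (S i))) by (apply (trunc_in_E E N); auto).
  destruct (Esym z x Hbz Hx) as [_ Hle].
  { intros j. destruct (Nat.le_gt_cases j i) as [h|h].
    - eapply Rle_trans. apply (mu_fin_le _ (mu x i)); auto. apply mu_anti_le; auto.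
    - eapply Rle_trans. apply (mu_fin_zero _ (seq 0 (S i))); auto.
      intros k Hk. unfold z, seq_scal. rewrite ind_val. destruct (Nat.ltb_spec k (S i)).
      exfalso. apply Hk. apply in_seq. lia. ring.
      rewrite length_seq. lia. apply mu_nonneg; auto. }
  unfold z in Hle. rewrite Nscal, Rabs_pos_eq in Hle by auto. auto.
Qed.

Lemma linf_props x : bounded_seq x ->
  (forall k, Rabs (x k) <= linf_norm x) /\ (forall B, (forall k, Rabs (x k) <= B) -> linf_norm x <= B).
Proof.
  intros [M HM]. destruct (lub_props (fun r => exists k, r = Rabs (x k)) (Rabs (x 0%nat)) M) as [H1 H2].
  exists 0%nat; auto. intros r [k ->]; auto.
  split. intros k. apply H1. exists k; auto.
  intros B HB. apply H2. intros r [k ->]; auto.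
Qed.

Fixpoint sumabs (x : rseq) n := match n with O => 0 | S n' => sumabs x n' + Rabs (x n') end.
Lemma sumabs_ge x n k : (k < n)%nat -> Rabs (x k) <= sumabs x n.
Proof.
  induction n as [|n IH]; intros Hk. lia. simpl.
  assert (0 <= sumabs x n). { clear. induction n; simpl. lra. pose proof (Rabs_pos (x n)). lra. }
  destruct (Nat.eq_dec k n). subst. lra. pose proof (Rabs_pos (x n)). specialize (IH ltac:(lia)). lra.
Qed.

Lemma c0_bounded x : c0_seq x -> bounded_seq x.
Proof.
  intros H. destruct (H 1 ltac:(lra)) as [n0 Hn0]. exists (1 + sumabs x n0). intros k.
  assert (0 <= sumabs x n0). { clear. induction n0; simpl. lra. pose proof (Rabs_pos (x n0)). lra. }
  destruct (Nat.lt_ge_cases k n0). pose proof (sumabs_ge x n0 k H1). lra. specialize (Hn0 k H1). lra.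
Qed.

Lemma wsumB_one n : wsumB (fun _ => 1) n = INR n.
Proof. induction n as [|n IH]. reflexivity. simpl wsumB. rewrite S_INR, IH. reflexivity. Qed.

Lemma caseA E N : symmetric_seq_space E N -> (forall x, E x -> forall k, x k = 0) ->
  exists (F : rseq -> Prop) (NF : rseq -> R),
    symmetric_seq_space F NF /\ reflexive F NF /\ (forall x, E x -> F x).
Proof.
  intros HE H0. set (w := fun _ : nat => 1).
  assert (Hw : wok w) by (split; [split; intros; unfold w; lra | unfold w; lra]).
  assert (Hd : wdiv w).
  { intros M. destruct (nat_unbounded M) as [n Hn]. exists n. rewrite Wsum_B. unfold w. rewrite wsumB_one. auto. }
  exists (FF w), (NF w). split. apply F_sym; auto. split. apply F_reflexive; auto.
  intros x Hx. refine (proj1 (L3 w x 0 _)). intros l Hl.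
  pose proof (WSa_bound w (sqs x) 0 l 0 (proj1 (proj1 Hw))) as Hb. rewrite Rmult_0_l in Hb.
  apply Hb. intros k _. unfold sqs. rewrite (H0 x Hx k). lra.
Qed.

Lemma msum_bound w x b c n : wdec w -> (forall i, mu x i * mu x i <= c * b i) -> msum w x n <= c * wbsum w b n.
Proof.
  intros Hw H. induction n as [|n IH]; simpl. lra.
  assert (w n * (mu x n * mu x n) <= w n * (c * b n)) by (apply Rmult_le_compat_l; [apply Hw | auto]).
  lra.
Qed.

Lemma caseB1 E N x0 k0 : symmetric_seq_space E N -> E x0 -> x0 k0 <> 0 ->
  (forall M, exists n, M < N (ind n)) ->
  exists (F : rseq -> Prop) (NF : rseq -> R),
    symmetric_seq_space F NF /\ reflexive F NF /\ (forall x, E x -> F x).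
Proof.
  intros HE Hx0 Hk0 Hunb.
  pose proof (unit_in_E E N x0 k0 HE Hx0 Hk0) as Hu.
  pose proof HE as HE'. destrE HE'.
  assert (Hind : forall n, E (ind n)) by (intros; apply (trunc_in_E E N); auto).
  assert (Hmono : forall n m, (n <= m)%nat -> N (ind n) <= N (ind m)).
  { intros n m Hnm. refine (proj2 (lattice E N (ind n) (ind m) HE (Ebdd _ (Hind n)) (Hind m) _)). intros k. rewrite !ind_val.
    destruct (Nat.ltb_spec k n); destruct (Nat.ltb_spec k m); try lia; rewrite ?Rabs_R1, ?Rabs_R0; lra. }
  assert (Hphi1 : 0 < N (ind 1)).
  { pose proof (Npos _ (Hind 1%nat)). destruct (Req_dec (N (ind 1)) 0) as [h|h]; [|lra].
    exfalso. pose proof (Nzero _ (Hind 1%nat) h 0%nat). rewrite ind_val in H0. simpl in H0. lra. }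
  set (phi := fun i => N (ind (S i))).
  assert (Hphip : forall i, N (ind 1) <= phi i) by (intros; apply Hmono; lia).
  set (b := fun i => / (phi i * phi i)).
  assert (Hbpos : forall i, 0 < b i).
  { intros i. unfold b. apply Rinv_0_lt_compat. specialize (Hphip i). apply Rmult_lt_0_compat; lra. }
  assert (Hbdec : forall i, b (S i) <= b i).
  { intros i. unfold b. specialize (Hphip i). assert (phi i <= phi (S i)) by (apply Hmono; lia).
    apply Rinv_le_contravar. apply Rmult_lt_0_compat; lra. apply Rmult_le_compat; lra. }
  assert (Hblim : forall eps, 0 < eps -> exists n, b n < eps).
  { intros eps He. destruct (Hunb (/ eps + 1)) as [n Hn]. exists n.
    assert (Hp : / eps + 1 < phi n) by (unfold phi; pose proof (Hmono n (S n) ltac:(lia)); lra).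
    assert (0 < / eps) by (apply Rinv_0_lt_compat; auto).
    unfold b. rewrite <- (Rinv_inv eps). apply Rinv_lt_contravar.
    apply Rmult_lt_0_compat; auto. apply Rmult_lt_0_compat; lra.
    assert (phi n * 1 <= phi n * phi n) by (apply Rmult_le_compat_l; lra). lra. }
  destruct (weights b Hbpos Hbdec Hblim) as [w [Hw [Hd Hwb]]].
  exists (FF w), (NF w). split. apply F_sym; auto. split. apply F_reflexive; auto.
  intros x Hx. exists (N x * N x * (2 * b 0%nat)). intros l Hl.
  pose proof (Ebdd x Hx) as Hbx.
  eapply Rle_trans. apply (B_le w x (proj1 Hw) Hbx (length l) l Hl eq_refl).
  eapply Rle_trans. apply (msum_bound w x b (N x * N x)). apply Hw.
  - intros i. pose proof (E2 E N x i HE Hu Hx) as H2. fold (phi i) in H2.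
    pose proof (mu_nonneg x i Hbx). specialize (Hphip i).
    assert (Hp : 0 < phi i) by lra.
    assert (mu x i <= N x / phi i).
    { apply (Rmult_le_reg_r (phi i)); auto. unfold Rdiv. rewrite Rmult_assoc, Rinv_l by lra. lra. }
    unfold b. replace (N x * N x * / (phi i * phi i)) with ((N x / phi i) * (N x / phi i)) by (field; lra).
    apply Rmult_le_compat; lra.
  - apply Rmult_le_compat_l. apply Rle_0_sqr. apply Hwb.
Qed.

Lemma le_eps a b : (forall eps, 0 < eps -> a <= b + eps) -> a <= b.
Proof.
  intros H. destruct (Rle_or_lt a b) as [h|h]; auto. specialize (H ((a - b) / 2) ltac:(lra)). lra.
Qed.

Lemma caseB2 E N x0 k0 : symmetric_seq_space E N -> E x0 -> x0 k0 <> 0 ->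
  (exists Mp, forall n, N (ind n) <= Mp) -> is_c0_equiv E N \/ is_linf_equiv E N.
Proof.
  intros HE Hx0 Hk0 [Mp HMp].
  pose proof (unit_in_E E N x0 k0 HE Hx0 Hk0) as Hu.
  pose proof HE as HE'. destrE HE'.
  assert (Hind : forall n, E (ind n)) by (intros; apply (trunc_in_E E N); auto).
  assert (Hbu : forall c, bounded_seq (unitv c)).
  { intros c. exists 1. intros k. unfold unitv. destruct (Nat.eqb k c); rewrite ?Rabs_R1, ?Rabs_R0; lra. }
  set (c := N (unitv 0)).
  assert (Hc : 0 < c).
  { pose proof (Npos _ (Hu 0%nat)). destruct (Req_dec c 0) as [h|h]; [|unfold c in *; lra].
    exfalso. pose proof (Nzero _ (Hu 0%nat) h 0%nat). unfold unitv in H0. simpl in H0. lra. }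
  assert (HNu : forall k, N (unitv k) = c).
  { intros k. apply Rle_antisym.
    - apply (Esym _ _ (Hbu k) (Hu 0%nat)). intros; apply unit_mu_le.
    - apply (Esym _ _ (Hbu 0%nat) (Hu k)). intros; apply unit_mu_le. }
  assert (Hlow : forall x, E x -> forall k, c * Rabs (x k) <= N x).
  { intros x Hx k. set (z := seq_scal (Rabs (x k)) (unitv k)).
    assert (Hz : forall j, Rabs (z j) <= Rabs (x j)).
    { intros j. unfold z, seq_scal, unitv. destruct (Nat.eqb_spec j k).
      subst. rewrite Rmult_1_r, Rabs_Rabsolu. lra. rewrite Rmult_0_r, Rabs_R0. apply Rabs_pos. }
    assert (Hbz : bounded_seq z).
    { destruct (Ebdd x Hx) as [M HM]. exists M. intros j. specialize (Hz j). specialize (HM j). lra. }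
    destruct (lattice E N z x HE Hbz Hx Hz) as [_ Hle].
    unfold z in Hle. rewrite Nscal, Rabs_Rabsolu, HNu in Hle by auto. lra. }
  assert (Hlowinf : forall x, E x -> c * linf_norm x <= N x).
  { intros x Hx. destruct (linf_props x (Ebdd x Hx)) as [_ H2].
    assert (linf_norm x <= N x / c).
    { apply H2. intros k. apply (Rmult_le_reg_l c); auto. unfold Rdiv.
      rewrite <- Rmult_assoc, (Rmult_comm c (N x)), Rmult_assoc, Rinv_r by lra. rewrite Rmult_1_r. apply Hlow; auto. }
    apply (Rmult_le_compat_l c) in H; [|lra]. unfold Rdiv in H.
    rewrite (Rmult_comm (N x)), <- Rmult_assoc, Rinv_r, Rmult_1_l in H by lra. auto. }
  assert (HMp0 : 0 < Mp).
  { pose proof (HMp 1%nat). pose proof (Npos _ (Hind 1%nat)).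
    destruct (Req_dec (N (ind 1)) 0) as [h|h]; [|lra].
    exfalso. pose proof (Nzero _ (Hind 1%nat) h 0%nat). rewrite ind_val in H1. simpl in H1. lra. }
  assert (Hdom : forall z a m, bounded_seq z -> 0 <= a -> (forall k, Rabs (z k) <= Rabs (a * ind m k)) ->
            E z /\ N z <= a * Mp).
  { intros z a m Hbz Ha Hzk.
    destruct (lattice E N z (seq_scal a (ind m)) HE Hbz (Escal _ _ (Hind m)) Hzk) as [Ez' Hle].
    split; auto. rewrite Nscal, Rabs_pos_eq in Hle by auto.
    assert (a * N (ind m) <= a * Mp) by (apply Rmult_le_compat_l; auto). lra. }
  destruct (classic (exists x1, E x1 /\ ~ c0_seq x1)) as [[x1 [Hx1 Hnc]]|Hall].
  - right.
    assert (Heps : exists eps, 0 < eps /\ forall n0, exists k, (n0 <= k)%nat /\ eps <= Rabs (x1 k)).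
    { apply NNPP. intro Hno. apply Hnc. intros eps He. apply NNPP. intro Hno2. apply Hno. exists eps. split; auto.
      intros n0. apply NNPP. intro Hno3. apply Hno2. exists n0. intros k Hk.
      destruct (Rlt_or_le (Rabs (x1 k)) eps) as [h|h]; auto. exfalso. apply Hno3. exists k; auto. }
    destruct Heps as [eps [He Hinf]].
    assert (Hl : forall n, exists l, NoDup l /\ length l = n /\ forall k, In k l -> eps <= Rabs (x1 k)).
    { intros n. induction n as [|n IH].
      - exists nil. split. constructor. split. reflexivity. intros k [].
      - destruct IH as [l [H1 [H2 H3]]]. destruct (Hinf (list_max l + 1)%nat) as [k [Hk1 Hk2]].
        assert (Hkl : ~ In k l).
        { intro Hin. assert (Hf : List.Forall (fun j => (j <= list_max l)%nat) l) by (apply list_max_le; apply Nat.le_refl).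
          rewrite List.Forall_forall in Hf. specialize (Hf _ Hin). lia. }
        exists (k :: l). split. constructor; auto. split. simpl; lia.
        intros j [hj|hj]. subst; auto. auto. }
    set (one := fun _ : nat => 1).
    assert (Hbone : bounded_seq one) by (exists 1; intros; unfold one; rewrite Rabs_R1; lra).
    set (x2 := seq_scal (/ eps) x1).
    assert (Hx2 : E x2) by (apply Escal; auto).
    assert (Hone : E one).
    { apply (Esym one x2 Hbone Hx2). intros j.
      eapply Rle_trans. apply (mu_fin_le _ 1); auto. lra. intros; unfold one; rewrite Rabs_R1; lra.
      destruct (Hl (S j)) as [l [H1 [H2 H3]]].
      apply (mu_ge_list x2 j 1 l (Ebdd _ Hx2) H1). lia.
      intros k Hk. unfold x2, seq_scal. rewrite Rabs_mult, Rabs_pos_eq by (left; apply Rinv_0_lt_compat; auto).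
      specialize (H3 k Hk). apply (Rmult_le_reg_l eps); auto. rewrite <- Rmult_assoc, Rinv_r by lra. lra. }
    assert (Hone0 : 0 < N one).
    { pose proof (Npos _ Hone). destruct (Req_dec (N one) 0) as [h|h]; [|lra].
      exfalso. pose proof (Nzero _ Hone h 0%nat). unfold one in H0. lra. }
    assert (Hallb : forall y, bounded_seq y -> E y /\ N y <= N one * linf_norm y).
    { intros y Hy. destruct (linf_props y Hy) as [H1 _].
      assert (HL : 0 <= linf_norm y) by (pose proof (H1 0%nat); pose proof (Rabs_pos (y 0%nat)); lra).
      destruct (lattice E N y (seq_scal (linf_norm y) one) HE Hy (Escal _ _ Hone)) as [Ey Hle].
      { intros k. unfold seq_scal, one. rewrite Rmult_1_r. rewrite (Rabs_pos_eq (linf_norm y) HL). apply H1. }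
      split; auto. rewrite Nscal, Rabs_pos_eq in Hle by auto. lra. }
    split.
    + intros x. split. apply Ebdd. intros Hb. apply Hallb; auto.
    + exists c, (N one). split; auto. split; auto. intros x Hx. split. apply Hlowinf; auto.
      apply Hallb. apply Ebdd; auto.
  - left.
    assert (Hc0 : forall x, E x -> c0_seq x).
    { intros x Hx. apply NNPP. intro Hn. apply Hall. exists x. auto. }
    assert (Main : forall x, c0_seq x -> E x /\ N x <= Mp * linf_norm x).
    { intros x Hx. pose proof (c0_bounded x Hx) as Hbx.
      destruct (linf_props x Hbx) as [Lk _].
      set (L := linf_norm x) in *.
      assert (HL : 0 <= L) by (pose proof (Lk 0%nat); pose proof (Rabs_pos (x 0%nat)); lra).
      set (u := trunc x).
      assert (Hu' : forall n, E (u n)) by (intros; apply (trunc_in_E E N); auto).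
      assert (Hsub : forall a b, E a -> E b -> E (seq_sub a b)).
      { intros a b Ha Hb. replace (seq_sub a b) with (seq_add a (seq_scal (-1) b)). apply Eadd; auto.
        apply functional_extensionality; intros k; unfold seq_add, seq_scal, seq_sub; ring. }
      assert (Hcauchy : forall eps, 0 < eps -> exists n0, forall m n, (n0 <= m)%nat -> (n0 <= n)%nat ->
                 N (seq_sub (u m) (u n)) < eps).
      { intros eps He. set (eta := eps / (2 * (Mp + 1))).
        assert (Heta : 0 < eta) by (unfold eta; apply Rdiv_lt_0_compat; lra).
        destruct (Hx eta Heta) as [n0 Hn0]. exists n0. intros m n Hm Hn.
        assert (Hd1 : forall k, Rabs (seq_sub (u m) (u n) k) <= eta).
        { intros k. unfold seq_sub, u. rewrite !trunc_val.
          destruct (Nat.ltb_spec k m); destruct (Nat.ltb_spec k n).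
          - rewrite Rminus_diag, Rabs_R0. lra.
          - rewrite Rminus_0_r. specialize (Hn0 k ltac:(lia)). lra.
          - rewrite Rminus_0_l, Rabs_Ropp. specialize (Hn0 k ltac:(lia)). lra.
          - rewrite Rminus_diag, Rabs_R0. lra. }
        assert (Hd2 : forall k, (Nat.max m n <= k)%nat -> seq_sub (u m) (u n) k = 0).
        { intros k Hk. unfold seq_sub, u. rewrite !trunc_val.
          destruct (Nat.ltb_spec k m); destruct (Nat.ltb_spec k n); try lia. ring. }
        assert (Hk : forall k, Rabs (seq_sub (u m) (u n) k) <= Rabs (eta * ind (Nat.max m n) k)).
        { intros k. rewrite ind_val. destruct (Nat.ltb_spec k (Nat.max m n)).
          - rewrite Rmult_1_r, (Rabs_pos_eq eta) by lra. apply Hd1.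
          - rewrite Hd2 by lia. rewrite Rmult_0_r, Rabs_R0. lra. }
        assert (Hbd : bounded_seq (seq_sub (u m) (u n))).
        { exists eta. exact Hd1. }
        destruct (Hdom _ eta _ Hbd ltac:(lra) Hk) as [_ Hle].
        assert (eta * Mp < eps).
        { unfold eta. apply (Rmult_lt_reg_r (2 * (Mp + 1))). lra.
          replace (eps / (2 * (Mp + 1)) * Mp * (2 * (Mp + 1))) with (eps * Mp) by (field; lra). nra. }
        lra. }
      destruct (Ecomp u Hu' Hcauchy) as [z [Hz Hconv]].
      assert (Hxz : x = z).
      { apply functional_extensionality. intros k.
        apply Rminus_diag_uniq. apply (small_zero _ 1). lra.
        intros d Hd. destruct (Hconv (c * d) ltac:(apply Rmult_lt_0_compat; auto)) as [n0 Hn0].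
        set (n1 := Nat.max n0 (S k)).
        specialize (Hn0 n1 ltac:(unfold n1; lia)).
        pose proof (Hlow _ (Hsub _ _ (Hu' n1) Hz) k) as Hl2.
        assert (Ev : seq_sub (u n1) z k = x k - z k).
        { unfold seq_sub, u. rewrite trunc_val. destruct (Nat.ltb_spec k n1); [reflexivity|unfold n1 in *; lia]. }
        rewrite Ev in Hl2.
        assert (Hlt : c * Rabs (x k - z k) < c * d) by lra.
        apply Rmult_lt_reg_l in Hlt; auto. lra. }
      subst z. split; auto.
      apply le_eps. intros eps He. destruct (Hconv eps He) as [n0 Hn0]. specialize (Hn0 n0 (le_n _)).
      assert (Ex : x = seq_add (u n0) (seq_scal (-1) (seq_sub (u n0) x))).
      { apply functional_extensionality; intros k; unfold seq_add, seq_scal, seq_sub; ring. }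
      assert (Hun : N (u n0) <= L * Mp).
      { refine (proj2 (Hdom (u n0) L n0 (Ebdd _ (Hu' n0)) HL _)).
        intros k. unfold u. rewrite trunc_val, ind_val. destruct (Nat.ltb k n0).
        rewrite Rmult_1_r, (Rabs_pos_eq L HL). apply Lk. rewrite Rmult_0_r, Rabs_R0. lra. }
      assert (E2 : E (seq_sub (u n0) x)) by (apply Hsub; auto).
      rewrite Ex at 1. eapply Rle_trans. apply (Ntri _ _ (Hu' n0) (Escal _ _ E2)).
      rewrite (Nscal _ _ E2). assert (Ha1 : Rabs (-1) = 1) by (rewrite Rabs_left; lra). rewrite Ha1. lra. }
    split.
    + intros x. split. apply Hc0. intros H. apply Main; auto.
    + exists c, Mp. split; auto. split; auto. intros x Hx. split. apply Hlowinf; auto.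
      apply Main. apply Hc0; auto.
Qed.

Theorem corollary3p2 (E : rseq -> Prop) (N : rseq -> R) :
  symmetric_seq_space E N ->
  ~ is_c0_equiv E N ->
  ~ is_linf_equiv E N ->
  exists (F : rseq -> Prop) (NF : rseq -> R),
    symmetric_seq_space F NF /\ reflexive F NF /\ (forall x, E x -> F x).
Proof.
  intros HE Hnc0 Hnlinf.
  destruct (classic (exists x0 k0, E x0 /\ x0 k0 <> 0)) as [[x0 [k0 [Hx0 Hk0]]] | Hno].
  - destruct (classic (forall M, exists n, M < N (ind n))) as [Hunb | Hb].
    + apply (caseB1 E N x0 k0); auto.
    + exfalso.
      assert (HMp : exists Mp, forall n, N (ind n) <= Mp).
      { apply NNPP. intro H1. apply Hb. intros M. apply NNPP. intro H2. apply H1. exists M.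
        intros n. destruct (Rle_or_lt (N (ind n)) M) as [h|h]; auto. exfalso. apply H2. exists n; auto. }
      destruct (caseB2 E N x0 k0 HE Hx0 Hk0 HMp) as [h|h]; auto.
  - apply (caseA E N); auto. intros x Hx k. apply NNPP. intro Hk. apply Hno. exists x, k; auto.
Qed.
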